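(* Under the standing assumptions, suppose $(D)$ has an optimal solution $p^*$ with $\|p^*\|\le R$ ($R>0$) and $D_f>0$. Let $(\epsilon_n)_{n\ge0}$ be a decreasing sequence of positive reals with $\epsilon_n\to0$. For each $n$, run the fast gradient method on $\theta_{\rho_n,\kappa_n}$ with $\rho_n=\frac{\epsilon_n}{3D_f}$, $\kappa_n=\frac{2\epsilon_n}{3R^2}$, and let $k(\epsilon_n)$ be an iteration index with $\theta(p_{k(\epsilon_n)})-\theta(p^* )\le\epsilon_n$ and $\|\nabla\theta_{\rho_n}(p_{k(\epsilon_n)})\|\le\frac{2\epsilon_n}{R}$. Set $\bar x_n:=x_{f,p_{k(\epsilon_n)}}\in\operatorname{dom} f$ and $\bar y_n:=x_{g,p_{k(\epsilon_n)}}\in\operatorname{dom} g$ (computed with parameter $\rho_n$). Then $(\bar x_n)$ has a weakly convergent subsequence, and every weak sequential cluster point $\bar x$ of $(\bar x_n)$ is an optimal solution of $(P)$, i.e. $\bar x\in\operatorname{dom} f$, $A\bar x\in\operatorname{dom} g$ and $f(\bar x)+g(A\bar x)=v(P)$.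
   Context: Standing assumptions: $\mathcal{H}$ is a real Hilbert space; $f:\mathcal{H}\to\mathbb{R}\cup\{+\infty\}$ is proper, convex, lower semicontinuous with bounded effective domain; $g:\mathbb{R}^m\to\mathbb{R}\cup\{+\infty\}$ is proper, lower semicontinuous and $\mu$-strongly convex for some $\mu>0$; $A:\mathcal{H}\to\mathbb{R}^m$ is linear and continuous with $A(\operatorname{dom} f)\cap\operatorname{dom} g\neq\emptyset$. $(P)$ is $\inf_{x\in\mathcal{H}}\{f(x)+g(Ax)\}$, $(D)$ is $\sup_{p}\{-f^*(A^*p)-g^*(-p)\}$. $D_f:=\sup\{\tfrac12\|x\|^2:x\in\operatorname{dom} f\}$. $\theta(p):=f^*(A^*p)+g^*(-p)$. For $\rho>0$, $f_\rho^*(q):=\sup_{x}\{\langle q,x\rangle-f(x)-\frac\rho2\|x\|^2\}$; $x_{f,p}$ is the unique maximizer in the definition of $f_\rho^*(A^*p)$; $x_{g,p}:=\nabla g^*(-p)$, the unique minimizer of $x\mapsto\langle p,x\rangle+g(x)$. $\theta_\rho(p):=f_\rho^*(A^*p)+g^*(-p)$, $\nabla\theta_\rho(p)=Ax_{f,p}-x_{g,p}$; $\theta_{\rho,\kappa}:=\theta_\rho+\frac\kappa2\|\cdot\|^2$; $L(\rho,\kappa):=\frac{\|A\|^2}{\rho}+\frac1\mu+\kappa$. Fast gradient method on $\theta_{\rho,\kappa}$: $w_0=p_0=0$, $p_{k+1}=w_k-\frac{1}{L(\rho,\kappa)}\nabla\theta_{\rho,\kappa}(w_k)$, $w_{k+1}=p_{k+1}+\frac{\sqrt{L(\rho,\kappa)}-\sqrt\kappa}{\sqrt{L(\rho,\kappa)}+\sqrt\kappa}(p_{k+1}-p_k)$.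 *)

(* Defs.v *)
From Stdlib Require Import Reals Classical ClassicalEpsilon FunctionalExtensionality.
From Stdlib Require Fin.
Open Scope R_scope.

Inductive Rbar : Type := Finite (r : R) | p_infty | m_infty.

Definition Rbar_le (x y : Rbar) : Prop :=
  match x, y with
  | m_infty, _ => True
  | _, p_infty => True
  | Finite a, Finite b => a <= b
  | _, _ => False
  end.

Definition Rbar_lt (x y : Rbar) : Prop :=
  match x, y with
  | m_infty, m_infty => False
  | m_infty, _ => True
  | Finite _, p_infty => True
  | Finite a, Finite b => a < b
  | _, _ => False
  end.

(* +oo absorbs (the case +oo + -oo never arises below) *)
Definition Rbar_plus (x y : Rbar) : Rbar :=
  match x, y with
  | Finite a, Finite b => Finite (a + b)
  | p_infty, _ | _, p_infty => p_infty
  | _, _ => m_infty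
  end.

Definition Rbar_opp (x : Rbar) : Rbar :=
  match x with Finite a => Finite (- a) | p_infty => m_infty | m_infty => p_infty end.

(* supremum of a set of reals in the extended reals (sup of empty set = -oo) *)
Definition Rbar_sup (E : R -> Prop) : Rbar :=
  match excluded_middle_informative (exists x, E x) with
  | left ne =>
      match excluded_middle_informative (bound E) with
      | left b => Finite (proj1_sig (completeness E b ne))
      | right _ => p_infty
      end
  | right _ => m_infty
  end.

Definition Rbar_inf (E : R -> Prop) : Rbar :=
  Rbar_opp (Rbar_sup (fun t => E (- t))).

Record Hilbert : Type := {
  hcar :> Type;
  hzero : hcar;
  hplus : hcar -> hcar -> hcar;
  hopp : hcar -> hcar;
  hscal : R -> hcar -> hcar;
  hinner : hcar -> hcar -> R;
  hplus_assoc : forall x y z, hplus x (hplus y z) = hplus (hplus x y) z;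
  hplus_comm : forall x y, hplus x y = hplus y x;
  hplus_zero_r : forall x, hplus x hzero = x;
  hplus_opp_r : forall x, hplus x (hopp x) = hzero;
  hscal_assoc : forall a b x, hscal a (hscal b x) = hscal (a * b) x;
  hscal_one : forall x, hscal 1 x = x;
  hscal_distr_l : forall a x y, hscal a (hplus x y) = hplus (hscal a x) (hscal a y);
  hscal_distr_r : forall a b x, hscal (a + b) x = hplus (hscal a x) (hscal b x);
  hinner_sym : forall x y, hinner x y = hinner y x;
  hinner_plus_l : forall x y z, hinner (hplus x y) z = hinner x z + hinner y z;
  hinner_scal_l : forall a x y, hinner (hscal a x) y = a * hinner x y;
  hinner_pos : forall x, 0 <= hinner x x;
  hinner_def : forall x, hinner x x = 0 -> x = hzero;
  hcomplete : forall u : nat -> hcar,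
    (forall eps, 0 < eps -> exists N, forall n k, (N <= n)%nat -> (N <= k)%nat ->
        sqrt (hinner (hplus (u n) (hopp (u k))) (hplus (u n) (hopp (u k)))) < eps) ->
    exists l, forall eps, 0 < eps -> exists N, forall n, (N <= n)%nat ->
        sqrt (hinner (hplus (u n) (hopp l)) (hplus (u n) (hopp l))) < eps
}.

Arguments hzero {h}.
Arguments hplus {h}.
Arguments hopp {h}.
Arguments hscal {h}.
Arguments hinner {h}.

Definition hminus {H : Hilbert} (x y : H) : H := hplus x (hopp y).
Definition hnorm {H : Hilbert} (x : H) : R := sqrt (hinner x x).

Definition weak_cv {H : Hilbert} (u : nat -> H) (x : H) : Prop :=
  forall y : H, Un_cv (fun n => hinner (u n) y) (hinner x y).

Definition RM (m : nat) : Type := Fin.t m -> R.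

Fixpoint fsum (m : nat) : (Fin.t m -> R) -> R :=
  match m return (Fin.t m -> R) -> R with
  | O => fun _ => 0
  | S k => fun v => v Fin.F1 + fsum k (fun i => v (Fin.FS i))
  end.

Definition rm_zero {m} : RM m := fun _ => 0.
Definition rm_plus {m} (x y : RM m) : RM m := fun i => x i + y i.
Definition rm_minus {m} (x y : RM m) : RM m := fun i => x i - y i.
Definition rm_opp {m} (x : RM m) : RM m := fun i => - x i.
Definition rm_scal {m} (a : R) (x : RM m) : RM m := fun i => a * x i.
Definition rm_inner {m} (x y : RM m) : R := fsum m (fun i => x i * y i).
Definition rm_norm {m} (x : RM m) : R := sqrt (rm_inner x x).

Section OnH.
Context {H : Hilbert}.

Definition domH (f : H -> Rbar) (x : H) : Prop := exists r, f x = Finite r.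

Definition properH (f : H -> Rbar) : Prop :=
  (forall x, f x <> m_infty) /\ exists x, domH f x.

Definition convexH (f : H -> Rbar) : Prop :=
  forall x y fx fy t, f x = Finite fx -> f y = Finite fy -> 0 <= t <= 1 ->
    Rbar_le (f (hplus (hscal t x) (hscal (1 - t) y))) (Finite (t * fx + (1 - t) * fy)).

Definition lscH (f : H -> Rbar) : Prop :=
  forall x c, Rbar_lt (Finite c) (f x) ->
    exists d, 0 < d /\ forall y, hnorm (hminus y x) < d -> Rbar_lt (Finite c) (f y).

Definition bounded_domH (f : H -> Rbar) : Prop :=
  exists M, forall x, domH f x -> hnorm x <= M.

End OnH.

Section OnRM.
Context {m : nat}.

Definition domRM (g : RM m -> Rbar) (y : RM m) : Prop := exists r, g y = Finite r.

Definition properRM (g : RM m -> Rbar) : Prop :=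
  (forall y, g y <> m_infty) /\ exists y, domRM g y.

Definition lscRM (g : RM m -> Rbar) : Prop :=
  forall y c, Rbar_lt (Finite c) (g y) ->
    exists d, 0 < d /\ forall z, rm_norm (rm_minus z y) < d -> Rbar_lt (Finite c) (g z).

Definition strongly_convexRM (mu : R) (g : RM m -> Rbar) : Prop :=
  forall x y gx gy t, g x = Finite gx -> g y = Finite gy -> 0 <= t <= 1 ->
    Rbar_le (g (rm_plus (rm_scal t x) (rm_scal (1 - t) y)))
            (Finite (t * gx + (1 - t) * gy
                     - mu / 2 * t * (1 - t) * (rm_norm (rm_minus x y)) ^ 2)).
End OnRM.

Definition linear_op {H : Hilbert} {m : nat} (A : H -> RM m) : Prop :=
  (forall x y, A (hplus x y) = rm_plus (A x) (A y)) /\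
  (forall a x, A (hscal a x) = rm_scal a (A x)).

Definition continuous_op {H : Hilbert} {m : nat} (A : H -> RM m) : Prop :=
  forall x eps, 0 < eps -> exists d, 0 < d /\
    forall y, hnorm (hminus y x) < d -> rm_norm (rm_minus (A y) (A x)) < eps.

Section Problem.
Context {H : Hilbert} {m : nat} (f : H -> Rbar) (g : RM m -> Rbar) (A : H -> RM m).

Definition valP : Rbar :=
  Rbar_inf (fun t => exists x fx gy,
    f x = Finite fx /\ g (A x) = Finite gy /\ t = fx + gy).

(* f^*(A^* p) = sup_x <A^* p, x> - f x, with <A^* p, x> = <p, A x> *)
Definition fconjA (p : RM m) : Rbar :=
  Rbar_sup (fun t => exists x fx, f x = Finite fx /\ t = rm_inner p (A x) - fx).

Definition gconj_neg (p : RM m) : Rbar :=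
  Rbar_sup (fun t => exists y gy, g y = Finite gy /\ t = rm_inner (rm_opp p) y - gy).

Definition theta (p : RM m) : Rbar := Rbar_plus (fconjA p) (gconj_neg p).

(* x_{f,p}: the maximizer in the definition of f_rho^*(A^* p) *)
Definition xf (rho : R) (p : RM m) : H :=
  epsilon (inhabits hzero) (fun x => exists fx, f x = Finite fx /\
    forall x' fx', f x' = Finite fx' ->
      rm_inner p (A x') - fx' - rho / 2 * (hnorm x') ^ 2
      <= rm_inner p (A x) - fx - rho / 2 * (hnorm x) ^ 2).

(* x_{g,p}: the minimizer of y |-> <p,y> + g y  ( = grad g^*(-p) ) *)
Definition xg (p : RM m) : RM m :=
  epsilon (inhabits rm_zero) (fun y => exists gy, g y = Finite gy /\
    forall y' gy', g y' = Finite gy' -> rm_inner p y + gy <= rm_inner p y' + gy').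

Definition grad_theta_rho (rho : R) (p : RM m) : RM m :=
  rm_minus (A (xf rho p)) (xg p).

(* fast gradient method on theta_{rho,kappa}; returns (p_k, w_k);
   nA stands for ||A||, mu for the strong convexity modulus *)
Definition Lrk (nA mu rho kappa : R) : R := nA ^ 2 / rho + 1 / mu + kappa.

Fixpoint fgm (nA mu rho kappa : R) (k : nat) : RM m * RM m :=
  match k with
  | O => (rm_zero, rm_zero)
  | S k' =>
      let (p, w) := fgm nA mu rho kappa k' in
      let L := Lrk nA mu rho kappa in
      let gradw := rm_plus (grad_theta_rho rho w) (rm_scal kappa w) in
      let p' := rm_minus w (rm_scal (1 / L) gradw) in
      let beta := (sqrt L - sqrt kappa) / (sqrt L + sqrt kappa) in
      (p', rm_plus p' (rm_scal beta (rm_minus p' p)))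
  end.

End Problem.

(* Main.v *)
Require Import Defs.
From Stdlib Require Import Reals Lra Lia Psatz Classical ClassicalEpsilon FunctionalExtensionality.
From Stdlib Require Fin.
Open Scope R_scope.
Arguments hplus_assoc {h}.
Arguments hplus_comm {h}.
Arguments hplus_zero_r {h}.
Arguments hplus_opp_r {h}.
Arguments hscal_assoc {h}.
Arguments hscal_one {h}.
Arguments hscal_distr_l {h}.
Arguments hscal_distr_r {h}.
Arguments hinner_sym {h}.
Arguments hinner_plus_l {h}.
Arguments hinner_scal_l {h}.
Arguments hinner_pos {h}.
Arguments hinner_def {h}.
Arguments hcomplete {h}.

Section HB.
Context {H : Hilbert}.

Definition Nm (x : H) : R := hinner x x.

Lemma hinner_plus_r (x y z : H) : hinner x (hplus y z) = hinner x y + hinner x z.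
Proof. rewrite hinner_sym, hinner_plus_l, (hinner_sym y), (hinner_sym z); ring. Qed.
Lemma hinner_scal_r a (x y : H) : hinner x (hscal a y) = a * hinner x y.
Proof. rewrite hinner_sym, hinner_scal_l, hinner_sym; ring. Qed.

Lemma hscal_zero (x : H) : hscal 0 x = hzero.
Proof.
  assert (E : hplus (hscal 0 x) (hscal 0 x) = hscal 0 x).
  { rewrite <- hscal_distr_r. f_equal; ring. }
  set (s := hscal 0 x) in *.
  transitivity (hplus s (hplus s (hopp s))).
  - rewrite hplus_opp_r, hplus_zero_r. reflexivity.
  - rewrite hplus_assoc, E. apply hplus_opp_r.
Qed.

Lemma hinner_zero_l (y : H) : hinner hzero y = 0.
Proof. rewrite <- (hscal_zero y), hinner_scal_l; ring. Qed.
Lemma hinner_zero_r (y : H) : hinner y hzero = 0.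
Proof. rewrite hinner_sym; apply hinner_zero_l. Qed.
Lemma hinner_opp_l (x y : H) : hinner (hopp x) y = - hinner x y.
Proof.
  assert (E : hinner (hplus x (hopp x)) y = 0) by (rewrite hplus_opp_r; apply hinner_zero_l).
  rewrite hinner_plus_l in E; lra.
Qed.
Lemma hinner_opp_r (x y : H) : hinner y (hopp x) = - hinner y x.
Proof. rewrite hinner_sym, hinner_opp_l, hinner_sym; ring. Qed.
Lemma hinner_minus_l (x y z : H) : hinner (hminus x y) z = hinner x z - hinner y z.
Proof. unfold hminus; rewrite hinner_plus_l, hinner_opp_l; ring. Qed.
Lemma hinner_minus_r (x y z : H) : hinner z (hminus x y) = hinner z x - hinner z y.
Proof. unfold hminus; rewrite hinner_plus_r, hinner_opp_r; ring. Qed.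

Lemma Nm_pos (x : H) : 0 <= Nm x.
Proof. apply hinner_pos. Qed.

Lemma hnorm_pos (x : H) : 0 <= hnorm x.
Proof. apply sqrt_pos. Qed.

Lemma hnorm_sq (x : H) : hnorm x * hnorm x = Nm x.
Proof. unfold hnorm, Nm. apply sqrt_sqrt, hinner_pos. Qed.

Lemma hnorm_pow2 (x : H) : hnorm x ^ 2 = Nm x.
Proof. rewrite <- hnorm_sq; ring. Qed.

Lemma CS_sq (x y : H) : hinner x y * hinner x y <= Nm x * Nm y.
Proof.
  destruct (Req_dec (Nm y) 0) as [E|E].
  - apply hinner_def in E. subst y. rewrite hinner_zero_r.
    pose proof (Nm_pos x). unfold Nm at 2. rewrite hinner_zero_r. lra.
  - pose proof (Nm_pos y) as Py.
    set (t := hinner x y / Nm y).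
    pose proof (hinner_pos (hplus x (hscal (- t) y))) as P.
    rewrite hinner_plus_l, !hinner_plus_r, !hinner_scal_l, !hinner_scal_r in P.
    rewrite (hinner_sym y x) in P. fold (Nm x) (Nm y) in P.
    unfold t in P.
    assert (Nm y > 0) by lra.
    assert (Q : 0 <= Nm x - hinner x y * hinner x y / Nm y).
    { replace (Nm x - hinner x y * hinner x y / Nm y) with
        (Nm x + - (hinner x y / Nm y) * hinner x y +
         (- (hinner x y / Nm y) * hinner x y + - (hinner x y / Nm y) * (- (hinner x y / Nm y) * Nm y))) by (field; lra).
      exact P. }
    apply Rmult_le_compat_r with (r := Nm y) in Q; [|lra].
    replace ((Nm x - hinner x y * hinner x y / Nm y) * Nm y) with
      (Nm x * Nm y - hinner x y * hinner x y) in Q by (field; lra). lra.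
Qed.

Lemma CS (x y : H) : Rabs (hinner x y) <= hnorm x * hnorm y.
Proof.
  rewrite <- sqrt_Rsqr_abs. unfold hnorm. rewrite <- sqrt_mult by apply hinner_pos.
  apply sqrt_le_1_alt. unfold Rsqr. apply CS_sq.
Qed.

Lemma CS_le (x y : H) : hinner x y <= hnorm x * hnorm y.
Proof. pose proof (CS x y). pose proof (Rle_abs (hinner x y)). lra. Qed.

Lemma Nm_minus (x y : H) : Nm (hminus x y) = Nm x - 2 * hinner x y + Nm y.
Proof. unfold Nm. rewrite hinner_minus_l, !hinner_minus_r, (hinner_sym y x). ring. Qed.

Lemma Nm_scal a (x : H) : Nm (hscal a x) = a * a * Nm x.
Proof. unfold Nm. rewrite hinner_scal_l, hinner_scal_r. ring. Qed.

Lemma hnorm_scal a (x : H) : hnorm (hscal a x) = Rabs a * hnorm x.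
Proof.
  unfold hnorm. fold (Nm (hscal a x)) (Nm x). rewrite Nm_scal.
  rewrite sqrt_mult_alt by (apply Rle_0_sqr). rewrite <- (sqrt_Rsqr_abs a). reflexivity.
Qed.

Lemma hnorm_zero_iff (x : H) : hnorm x = 0 -> x = hzero.
Proof.
  intro E. apply hinner_def. pose proof (hnorm_sq x). rewrite E in H0. unfold Nm in H0. lra.
Qed.

Lemma Nm_le_sq (x : H) b : 0 <= b -> Nm x <= b * b -> hnorm x <= b.
Proof.
  intros Hb Hx. unfold hnorm. rewrite <- (sqrt_square b) by lra. apply sqrt_le_1_alt. exact Hx.
Qed.

Lemma hnorm_triangle (x y : H) : hnorm (hplus x y) <= hnorm x + hnorm y.
Proof.
  apply Nm_le_sq. pose proof (hnorm_pos x); pose proof (hnorm_pos y); lra.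
  unfold Nm. rewrite hinner_plus_l, !hinner_plus_r. rewrite (hinner_sym y x).
  pose proof (CS_le x y). pose proof (hnorm_sq x). pose proof (hnorm_sq y).
  unfold Nm in *. nra.
Qed.

Definition cvH (u : nat -> H) (x : H) : Prop :=
  forall eps, 0 < eps -> exists N, forall n, (N <= n)%nat -> hnorm (hminus (u n) x) < eps.

Lemma cvH_inner (u : nat -> H) x a : cvH u x -> Un_cv (fun n => hinner (u n) a) (hinner x a).
Proof.
  intros Hu eps Heps.
  destruct (Hu (eps / (hnorm a + 1))) as [N HN].
  { apply Rdiv_lt_0_compat; [lra|]. pose proof (hnorm_pos a); lra. }
  exists N. intros n Hn. unfold Rdist. specialize (HN n Hn).
  rewrite <- hinner_minus_l. eapply Rle_lt_trans; [apply CS|].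
  pose proof (hnorm_pos a). pose proof (hnorm_pos (hminus (u n) x)).
  apply Rlt_le_trans with (eps / (hnorm a + 1) * (hnorm a + 1)).
  - apply Rle_lt_trans with (hnorm (hminus (u n) x) * (hnorm a + 1)). nra.
    apply Rmult_lt_compat_r; lra.
  - right; field; lra.
Qed.

Lemma cvH_Nm (u : nat -> H) x : cvH u x -> Un_cv (fun n => Nm (u n)) (Nm x).
Proof.
  intros Hu.
  assert (E : forall n, Nm (u n) = Nm (hminus (u n) x) + 2 * hinner (u n) x - Nm x).
  { intro n. rewrite Nm_minus. ring. }
  assert (C1 : Un_cv (fun n => Nm (hminus (u n) x)) 0).
  { intros eps Heps. destruct (Hu (sqrt eps)) as [N HN]. apply sqrt_lt_R0; lra.
    exists N. intros n Hn. specialize (HN n Hn). unfold Rdist.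
    rewrite Rminus_0_r, Rabs_right by (apply Rle_ge, Nm_pos).
    rewrite <- hnorm_sq. pose proof (hnorm_pos (hminus (u n) x)).
    rewrite <- (sqrt_sqrt eps) by lra. apply Rmult_le_0_lt_compat; lra. }
  pose proof (cvH_inner u x x Hu) as C2.
  intros eps Heps. destruct (C1 (eps/3)) as [N1 H1]; [lra|]. destruct (C2 (eps/3)) as [N2 H2]; [lra|].
  exists (N1 + N2)%nat. intros n Hn. specialize (H1 n ltac:(lia)). specialize (H2 n ltac:(lia)).
  unfold Rdist in *. rewrite E.
  rewrite Rminus_0_r in H1. apply Rabs_def2 in H1. apply Rabs_def2 in H2. apply Rabs_def1; fold (Nm x) in *; lra.
Qed.

End HB.

From Stdlib Require Import Reals Lra Lia Psatz Classical ClassicalEpsilon FunctionalExtensionality.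
Open Scope R_scope.

Ltac hexp := unfold Nm, hminus in *; repeat rewrite ?hinner_plus_l, ?hinner_plus_r, ?hinner_scal_l, ?hinner_scal_r, ?hinner_opp_l, ?hinner_opp_r.

Ltac fld := field; repeat match goal with |- _ /\ _ => split | |- _ <> _ => intro | _ => lra end.

Lemma choice_nat {T : Type} (P : nat -> T -> Prop) : (forall n, exists y, P n y) -> exists u : nat -> T, forall n, P n (u n).
Proof.
  intro Hn. exists (fun n => proj1_sig (constructive_indefinite_description _ (Hn n))).
  intro n. exact (proj2_sig (constructive_indefinite_description _ (Hn n))).
Qed.

Lemma small_inv (e : R) : 0 < e -> exists N, forall n, (N <= n)%nat -> 1 / (INR n + 1) < e.
Proof.
  intro He. destruct (archimed_cor1 e He) as [N [HN1 HN2]]. exists N. intros n Hn.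
  apply le_INR in Hn. pose proof (lt_0_INR N ltac:(lia)).
  apply Rle_lt_trans with (/ INR N); [|exact HN1].
  unfold Rdiv. rewrite Rmult_1_l. apply Rinv_le_contravar; lra.
Qed.

Section MIN.
Context {H : Hilbert}.

Definition SC (D : H -> Prop) (F : H -> R) (c : R) :=
  forall x y t, D x -> D y -> 0 <= t <= 1 ->
    D (hplus (hscal t x) (hscal (1-t) y)) /\
    F (hplus (hscal t x) (hscal (1-t) y)) <= t * F x + (1-t) * F y - c * t * (1-t) * Nm (hminus x y).

Definition SeqClosed (D : H -> Prop) (F : H -> R) :=
  forall u x a, (forall n, D (u n)) -> cvH u x -> (forall n, F (u n) <= a) -> D x /\ F x <= a.

Lemma cvH_shift (u : nat -> H) x N : cvH u x -> cvH (fun n => u (n + N)%nat) x.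
Proof. intros Hu e He. destruct (Hu e He) as [M HM]. exists M. intros n Hn. apply HM. lia. Qed.

Lemma Nm_conv_minus (a b : H) t :
  Nm (hminus (hplus (hscal t a) (hscal (1-t) b)) b) = t * t * Nm (hminus a b).
Proof. hexp. rewrite (hinner_sym b a). ring. Qed.

Lemma hnorm_of_Nm (x : H) d : 0 <= d -> Nm x = d * d -> hnorm x = d.
Proof. intros Hd E. unfold hnorm. fold (Nm x). rewrite E. apply sqrt_square; auto. Qed.

Lemma SeqClosed_nbhd D F y0 : SeqClosed D F -> D y0 ->
  exists del, 0 < del /\ forall y, D y -> hnorm (hminus y y0) < del -> F y0 - 1 < F y.
Proof.
  intros HS Hy0. apply NNPP. intro Hn.
  assert (Hn' : forall n : nat, exists y, D y /\ hnorm (hminus y y0) < 1 / (INR n + 1) /\ F y <= F y0 - 1).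
  { intro n. apply NNPP. intro Hc. apply Hn. exists (1 / (INR n + 1)). split.
    - apply Rdiv_lt_0_compat; [lra|]. pose proof (pos_INR n); lra.
    - intros y Hy Hyn. apply Rnot_le_lt. intro Hle. apply Hc. exists y. auto. }
  apply choice_nat in Hn'. destruct Hn' as [u Hu].
  assert (Hc : cvH u y0).
  { intros e He. destruct (small_inv e He) as [N HN]. exists N. intros n Hn0.
    specialize (Hu n). specialize (HN n Hn0). lra. }
  destruct (HS u y0 (F y0 - 1) (fun n => proj1 (Hu n)) Hc (fun n => proj2 (proj2 (Hu n)))). lra.
Qed.

Lemma SC_lower D F c : 0 < c -> SC D F c -> SeqClosed D F -> (exists x, D x) ->
  exists b, forall y, D y -> b <= F y.
Proof.
  intros Hc HSC HS [y0 Hy0].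
  destruct (SeqClosed_nbhd D F y0 HS Hy0) as [del [Hdel Hnb]].
  exists (F y0 - 1 - 2 / (c * del * del)). intros y Hy.
  assert (P2 : 0 < 2 / (c * del * del)) by (apply Rdiv_lt_0_compat; [lra| apply Rmult_lt_0_compat; nra]).
  set (d := hnorm (hminus y y0)).
  destruct (Rlt_or_le d del) as [Hlt|Hge].
  - specialize (Hnb y Hy Hlt). lra.
  - set (t := del / (2 * d)).
    assert (Hd : 0 < d) by lra.
    assert (Ht : 0 < t <= 1/2).
    { unfold t. split. apply Rdiv_lt_0_compat; lra.
      apply Rmult_le_reg_r with (2 * d); [lra|]. unfold Rdiv. field_simplify; lra. }
    destruct (HSC y y0 t Hy Hy0 ltac:(lra)) as [HDz HFz].
    assert (Hz : hnorm (hminus (hplus (hscal t y) (hscal (1 - t) y0)) y0) = t * d).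
    { apply hnorm_of_Nm; [nra|]. rewrite Nm_conv_minus. rewrite <- (hnorm_sq (hminus y y0)). fold d. ring. }
    assert (Htd : t * d = del / 2) by (unfold t; fld).
    specialize (Hnb _ HDz ltac:(lra)).
    assert (Nm (hminus y y0) = d * d) by (rewrite <- hnorm_sq; reflexivity).
    rewrite H0 in HFz.
    assert (K : t * F y >= t * F y0 - 1 + c * t * (1 - t) * (d * d)) by lra.
    assert (K2 : F y0 - 1 / t + c * (1 - t) * (d * d) <= F y).
    { apply Rmult_le_reg_l with t; [lra|].
      replace (t * (F y0 - 1 / t + c * (1 - t) * (d * d))) with (t * F y0 - 1 + c * t * (1 - t) * (d * d)) by fld. lra. }
    assert (Hinv : 1 / t = 2 * d / del) by (unfold t; fld).
    rewrite Hinv in K2.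
    assert (Q : 0 <= c / 2 * (d - 2 / (c * del)) * (d - 2 / (c * del))).
    { rewrite Rmult_assoc. apply Rmult_le_pos; [lra|]. apply Rle_0_sqr. }
    assert (Q2 : c / 2 * (d - 2 / (c * del)) * (d - 2 / (c * del)) = c/2 * d * d - 2 * d / del + 2 / (c * del * del)) by fld.
    assert (c * (1 - t) * (d * d) >= c / 2 * d * d).
    { assert (0 <= c * (1/2 - t) * (d * d)). { apply Rmult_le_pos. apply Rmult_le_pos; lra. nra. }
      lra. }
    lra.
Qed.

Lemma min_exists D F c : 0 < c -> SC D F c -> SeqClosed D F -> (exists x, D x) ->
  exists x, D x /\ forall y, D y -> F x <= F y.
Proof.
  intros Hc HSC HS Hne.
  destruct (SC_lower D F c Hc HSC HS Hne) as [b Hb].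
  set (E := fun s => exists x, D x /\ s = - F x).
  assert (Eb : bound E). { exists (- b). intros s [x [Hx ->]]. specialize (Hb x Hx). lra. }
  assert (Ene : exists s, E s). { destruct Hne as [x Hx]. exists (- F x). exists x; auto. }
  destruct (completeness E Eb Ene) as [s0 [Hub Hlub]].
  assert (Hinf : forall y, D y -> - s0 <= F y).
  { intros y Hy. assert (E (- F y)) by (exists y; auto). specialize (Hub _ H0). lra. }
  assert (Hmin : forall n : nat, exists x, D x /\ F x <= - s0 + 1 / (INR n + 1)).
  { intro n. apply NNPP. intro Hn. assert (P : 0 < 1 / (INR n + 1)) by (apply Rdiv_lt_0_compat; [lra|]; pose proof (pos_INR n); lra).
    assert (is_upper_bound E (s0 - 1 / (INR n + 1))).
    { intros s [x [Hx ->]]. apply Rnot_lt_le. intro Hlt. apply Hn. exists x. split; auto. lra. }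
    specialize (Hlub _ H0). lra. }
  apply choice_nat in Hmin. destruct Hmin as [u Hu].
  assert (Hmid : forall n k, Nm (hminus (u n) (u k)) <= 4 / c * (1 / (INR n + 1) + 1 / (INR k + 1))).
  { intros n k. destruct (Hu n) as [Dn Fn]. destruct (Hu k) as [Dk Fk].
    destruct (HSC (u n) (u k) (1/2) Dn Dk ltac:(lra)) as [Dm Fm].
    specialize (Hinf _ Dm). pose proof (Nm_pos (hminus (u n) (u k))).
    apply Rmult_le_reg_l with (c / 4); [lra|].
    replace (c / 4 * (4 / c * (1 / (INR n + 1) + 1 / (INR k + 1)))) with (1 / (INR n + 1) + 1 / (INR k + 1)) by (pose proof (pos_INR n); pose proof (pos_INR k); fld).
    nra. }
  destruct (hcomplete u) as [x Hx].
  { intros e He. destruct (small_inv (c * e * e / 8)) as [N HN].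
    { apply Rdiv_lt_0_compat; [|lra]. apply Rmult_lt_0_compat; nra. }
    exists N. intros n k Hn Hk. fold (hminus (u n) (u k)). fold (hnorm (hminus (u n) (u k))).
    pose proof (HN n Hn). pose proof (HN k Hk). pose proof (Hmid n k).
    assert (Nm (hminus (u n) (u k)) < e * e).
    { eapply Rle_lt_trans; [exact H2|].
      apply Rlt_le_trans with (4 / c * (c * e * e / 8 + c * e * e / 8)).
      - apply Rmult_lt_compat_l; [apply Rdiv_lt_0_compat; lra| lra].
      - right. field. lra. }
    pose proof (hnorm_pos (hminus (u n) (u k))). rewrite <- hnorm_sq in H3. nra. }
  assert (Hcv : cvH u x) by exact Hx.
  assert (HxN : forall N : nat, D x /\ F x <= - s0 + 1 / (INR N + 1)).
  { intro N. apply (HS (fun n => u (n + N)%nat)).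
    - intro n. apply (Hu (n + N)%nat).
    - apply cvH_shift; auto.
    - intro n. destruct (Hu (n + N)%nat) as [_ Fu]. eapply Rle_trans; [exact Fu|].
      apply Rplus_le_compat_l. unfold Rdiv. rewrite !Rmult_1_l. apply Rinv_le_contravar.
      pose proof (pos_INR N); lra. rewrite plus_INR. pose proof (pos_INR n); lra. }
  exists x. split. apply (HxN O).
  intros y Hy. specialize (Hinf y Hy).
  apply Rnot_lt_le. intro Hlt.
  destruct (small_inv (F x - - s0)) as [N HN]; [lra|].
  destruct (HxN N) as [_ HF]. specialize (HN N (le_n N)). lra.
Qed.

End MIN.

From Stdlib Require Import Reals Lra Lia Psatz Classical ClassicalEpsilon FunctionalExtensionality.
Open Scope R_scope.

Section PROJ.
Context {H : Hilbert}.

Lemma heq_by_Nm (x y : H) : Nm (hminus x y) = 0 -> x = y.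
Proof.
  intro E. apply hinner_def in E. unfold hminus in E.
  transitivity (hplus x (hplus (hopp y) y)).
  - rewrite (hplus_comm (hopp y)), hplus_opp_r, hplus_zero_r. reflexivity.
  - rewrite hplus_assoc, E, hplus_comm, hplus_zero_r. reflexivity.
Qed.

Lemma hopp_scal (k : H) : hopp k = hscal (-1) k.
Proof. apply heq_by_Nm. hexp. ring. Qed.

Lemma lim_le (a : nat -> R) l b : Un_cv a l -> (forall n, a n <= b) -> l <= b.
Proof.
  intros Ha Hb. apply Rnot_lt_le. intro Hlt. destruct (Ha (l - b)) as [N HN]; [lra|].
  specialize (HN N (le_n N)). specialize (Hb N). unfold Rdist in HN. apply Rabs_def2 in HN. lra.
Qed.

Lemma lim_le_ev (a : nat -> R) l b N : Un_cv a l -> (forall n, (N <= n)%nat -> a n <= b) -> l <= b.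
Proof.
  intros Ha Hb. apply Rnot_lt_le. intro Hlt. destruct (Ha (l - b)) as [M HM]; [lra|].
  specialize (HM (N + M)%nat ltac:(lia)). specialize (Hb (N + M)%nat ltac:(lia)). unfold Rdist in HM. apply Rabs_def2 in HM. lra.
Qed.

Definition convexS (C : H -> Prop) := forall x y t, C x -> C y -> 0 <= t <= 1 -> C (hplus (hscal t x) (hscal (1-t) y)).
Definition closedS (C : H -> Prop) := forall u x, (forall n, C (u n)) -> cvH u x -> C x.

Lemma Nm_conv_dist (z x y : H) t :
  Nm (hminus z (hplus (hscal t x) (hscal (1 - t) y))) =
  t * Nm (hminus z x) + (1 - t) * Nm (hminus z y) - 1 * t * (1 - t) * Nm (hminus x y).
Proof. hexp. rewrite (hinner_sym x z), (hinner_sym y z), (hinner_sym y x). ring. Qed.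

Lemma proj_exists (C : H -> Prop) (z : H) : convexS C -> closedS C -> (exists x, C x) ->
  exists P, C P /\ forall c, C c -> hinner (hminus z P) (hminus c P) <= 0.
Proof.
  intros Hcv Hcl Hne.
  destruct (min_exists C (fun c => Nm (hminus z c)) 1) as [P [HP Hmin]]; auto; try lra.
  - intros x y t Hx Hy Ht. split; [apply Hcv; auto|]. rewrite Nm_conv_dist. lra.
  - intros u x a Hu Hx Ha. split; [apply (Hcl u x Hu Hx)|].
    apply (lim_le (fun n => Nm (hminus z (u n)))); auto.
    assert (E : forall w, Nm (hminus z w) = Nm z - 2 * hinner w z + Nm w).
    { intro w. rewrite Nm_minus, (hinner_sym z w). ring. }
    rewrite E. apply (Un_cv_ext (fun n => Nm z - 2 * hinner (u n) z + Nm (u n))).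
    { intro n. rewrite E. reflexivity. }
    apply CV_plus. apply CV_minus. intros e He; exists O; intros; unfold Rdist; rewrite Rminus_diag, Rabs_R0; lra.
    apply (CV_mult (fun _ => 2) (fun n => hinner (u n) z)). intros e He; exists O; intros; unfold Rdist; rewrite Rminus_diag, Rabs_R0; lra.
    apply cvH_inner; auto. apply cvH_Nm; auto.
  - exists P. split; auto. intros c Hc.
    assert (Hall : forall t, 0 < t <= 1 -> hinner (hminus z P) (hminus c P) <= t / 2 * Nm (hminus c P)).
    { intros t Ht. specialize (Hmin _ (Hcv c P t Hc HP ltac:(lra))).
      assert (E : Nm (hminus z (hplus (hscal t c) (hscal (1 - t) P))) =
                  Nm (hminus z P) - 2 * t * hinner (hminus z P) (hminus c P) + t * t * Nm (hminus c P)).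
      { hexp. rewrite (hinner_sym c z), (hinner_sym P z), (hinner_sym P c). ring. }
      rewrite E in Hmin. apply Rmult_le_reg_l with (2 * t); [lra|]. nra. }
    apply Rnot_lt_le. intro Hlt. set (v := hinner (hminus z P) (hminus c P)) in *.
    pose proof (Nm_pos (hminus c P)).
    set (w := Nm (hminus c P)) in *.
    destruct (Req_dec w 0) as [Hw|Hw].
    + specialize (Hall 1 ltac:(lra)). rewrite Hw in Hall. lra.
    + set (t := Rmin 1 (v / w)).
      assert (0 < v / w) by (apply Rdiv_lt_0_compat; lra).
      assert (Ht : 0 < t <= 1) by (unfold t; split; [apply Rmin_glb_lt; lra| apply Rmin_l]).
      specialize (Hall t Ht). assert (t <= v / w) by apply Rmin_r.
      assert (t * w <= v) by (apply Rmult_le_reg_r with (/ w); [apply Rinv_0_lt_compat; lra|]; rewrite Rmult_assoc, Rinv_r by lra; unfold Rdiv in *; lra).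
      nra.
Qed.

Lemma weak_closed (C : H -> Prop) (u : nat -> H) x : convexS C -> closedS C ->
  (forall n, C (u n)) -> weak_cv u x -> C x.
Proof.
  intros Hcv Hcl Hu Hw.
  destruct (proj_exists C x Hcv Hcl (ex_intro _ (u O) (Hu O))) as [P [HP Hv]].
  assert (L : Un_cv (fun n => hinner (u n) (hminus x P) - hinner P (hminus x P)) (hinner x (hminus x P) - hinner P (hminus x P))).
  { apply CV_minus. apply Hw. intros e He; exists O; intros; unfold Rdist; rewrite Rminus_diag, Rabs_R0; lra. }
  assert (Le : hinner x (hminus x P) - hinner P (hminus x P) <= 0).
  { apply (lim_le _ _ _ L). intro n. specialize (Hv (u n) (Hu n)).
    rewrite hinner_sym, hinner_minus_l in Hv. lra. }
  rewrite <- hinner_minus_l in Le. fold (Nm (hminus x P)) in Le. pose proof (Nm_pos (hminus x P)).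
  assert (x = P) by (apply heq_by_Nm; lra). subst; auto.
Qed.

Definition subspace (S : H -> Prop) := S hzero /\ (forall x y, S x -> S y -> S (hplus x y)) /\ (forall a x, S x -> S (hscal a x)).

Lemma subspace_convex S : subspace S -> convexS S.
Proof. intros [S0 [Sp Ss]] x y t Hx Hy _. apply Sp; apply Ss; auto. Qed.

Lemma proj_subspace (S : H -> Prop) z : subspace S -> closedS S ->
  exists P, S P /\ forall s, S s -> hinner (hminus z P) s = 0.
Proof.
  intros HS Hcl. destruct (proj_exists S z (subspace_convex S HS) Hcl (ex_intro _ hzero (proj1 HS))) as [P [HP Hv]].
  destruct HS as [S0 [Sp Ss]].
  exists P. split; auto. intros s Hs.
  pose proof (Hv (hplus P s) (Sp _ _ HP Hs)) as V1.
  pose proof (Hv (hplus P (hscal (-1) s)) (Sp _ _ HP (Ss _ _ Hs))) as V2.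
  assert (E1 : hinner (hminus z P) (hminus (hplus P s) P) = hinner (hminus z P) s) by (hexp; ring).
  assert (E2 : hinner (hminus z P) (hminus (hplus P (hscal (-1) s)) P) = - hinner (hminus z P) s) by (hexp; ring).
  rewrite E1 in V1. rewrite E2 in V2. lra.
Qed.

Definition linfun (l : H -> R) := (forall x y, l (hplus x y) = l x + l y) /\ (forall a x, l (hscal a x) = a * l x).

Lemma riesz (l : H -> R) M : linfun l -> (forall x, Rabs (l x) <= M * hnorm x) ->
  exists a, forall y, l y = hinner a y.
Proof.
  intros [Lp Ls] Hb.
  assert (L0 : l hzero = 0) by (rewrite <- (hscal_zero hzero), Ls; ring).
  assert (Lm : forall x y, l (hminus x y) = l x - l y).
  { intros x y. unfold hminus. rewrite Lp, hopp_scal, Ls. ring. }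
  destruct (classic (forall y, l y = 0)) as [Z|NZ].
  { exists hzero. intro y. rewrite Z, hinner_zero_l. reflexivity. }
  apply not_all_ex_not in NZ. destruct NZ as [z0 Hz0].
  set (z := hscal (1 / l z0) z0).
  assert (Lz : l z = 1) by (unfold z; rewrite Ls; field; auto).
  set (K := fun y => l y = 0).
  assert (SK : subspace K).
  { split; [exact L0|split]. intros x y Hx Hy; unfold K in *; rewrite Lp, Hx, Hy; ring.
    intros a x Hx; unfold K in *; rewrite Ls, Hx; ring. }
  assert (CK : closedS K).
  { intros u x Hu Hx. unfold K in *. apply NNPP. intro Hne.
    assert (Hlt : 0 < Rabs (l x)) by (apply Rabs_pos_lt; auto).
    assert (HM : 0 < M + 1).
    { pose proof (Hb x). pose proof (hnorm_pos x). destruct (Rle_or_lt 0 M); [lra|].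
      assert (M * hnorm x <= 0) by nra. lra. }
    destruct (Hx (Rabs (l x) / (M + 1))) as [N HN]. apply Rdiv_lt_0_compat; lra.
    specialize (HN N (le_n N)). pose proof (Hb (hminus (u N) x)). rewrite Lm, (Hu N) in H0.
    rewrite Rminus_0_l, Rabs_Ropp in H0.
    pose proof (hnorm_pos (hminus (u N) x)).
    assert (M * hnorm (hminus (u N) x) <= (M+1) * hnorm (hminus (u N) x)) by nra.
    assert ((M+1) * hnorm (hminus (u N) x) < Rabs (l x)).
    { apply Rmult_lt_compat_l with (r := M + 1) in HN; [|lra]. replace ((M + 1) * (Rabs (l x) / (M + 1))) with (Rabs (l x)) in HN by fld. lra. }
    lra. }
  destruct (proj_subspace K z SK CK) as [P [HP Ho]].
  set (u := hminus z P).
  assert (Lu : l u = 1) by (unfold u; rewrite Lm, Lz; unfold K in HP; rewrite HP; ring).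
  assert (Nu : Nm u <> 0).
  { intro E. apply hinner_def in E. rewrite E, L0 in Lu. lra. }
  exists (hscal (1 / Nm u) u). intro y.
  assert (Hk : K (hminus y (hscal (l y) u))) by (unfold K; rewrite Lm, Ls, Lu; ring).
  specialize (Ho _ Hk). fold u in Ho. rewrite hinner_minus_r, hinner_scal_r in Ho.
  rewrite hinner_scal_l. fold (Nm u) in Ho. rewrite (hinner_sym u y) in Ho |- *. field_simplify; auto.
  apply Rmult_eq_reg_r with (Nm u); auto. unfold Rdiv. rewrite Rmult_assoc, Rinv_l by auto. lra.
Qed.

End PROJ.

From Stdlib Require Import Reals Lra Lia Psatz Classical ClassicalEpsilon FunctionalExtensionality.
Open Scope R_scope.

Lemma Rabs_le_inv x M : Rabs x <= M -> -M <= x <= M.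
Proof. intro Hx. pose proof (Rle_abs x). pose proof (Rle_abs (-x)). rewrite Rabs_Ropp in H0. lra. Qed.

Lemma Rabs_le_of x M : -M <= x <= M -> Rabs x <= M.
Proof. intros [H1 H2]. unfold Rabs. destruct (Rcase_abs x); lra. Qed.

Definition sinc (s : nat -> nat) := forall j, (s j < s (S j))%nat.

Lemma sinc_mono s : sinc s -> forall a b, (a < b)%nat -> (s a < s b)%nat.
Proof. intros Hs a b Hab. induction Hab. apply Hs. specialize (Hs m). lia. Qed.

Lemma sinc_ge s : sinc s -> forall j, (j <= s j)%nat.
Proof. intros Hs j. induction j. lia. specialize (Hs j). lia. Qed.

Lemma sinc_comp s t : sinc s -> sinc t -> sinc (fun n => s (t n)).
Proof. intros Hs Ht j. apply sinc_mono; auto. Qed.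

Lemma CV_const c : Un_cv (fun _ => c) c.
Proof. intros e He; exists O; intros; unfold Rdist; rewrite Rminus_diag, Rabs_R0; lra. Qed.

Lemma BW_sub (s : nat -> R) M : (forall n, Rabs (s n) <= M) ->
  exists sig, sinc sig /\ exists l, Un_cv (fun j => s (sig j)) l.
Proof.
  intros Hb.
  destruct (Bolzano_Weierstrass s (fun c => -M <= c <= M) (compact_P3 (-M) M)) as [l Hl].
  { intro n. specialize (Hb n). apply Rabs_le_inv in Hb. lra. }
  assert (Hn : forall N j : nat, exists p, (N <= p)%nat /\ Rabs (s p - l) < 1 / (INR j + 1)).
  { intros N j. assert (Pj : 0 < 1 / (INR j + 1)) by (apply Rdiv_lt_0_compat; [lra|]; pose proof (pos_INR j); lra).
    destruct (Hl (fun y => Rabs (y - l) < 1 / (INR j + 1)) N) as [p [Hp Vp]].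
    { exists (mkposreal _ Pj). intros y Hy. unfold disc in Hy. simpl in Hy. exact Hy. }
    exists p; auto. }
  set (nx := fun N j => proj1_sig (constructive_indefinite_description _ (Hn N j))).
  assert (Hnx : forall N j, (N <= nx N j)%nat /\ Rabs (s (nx N j) - l) < 1 / (INR j + 1)).
  { intros N j. exact (proj2_sig (constructive_indefinite_description _ (Hn N j))). }
  set (sig := fix sg (j : nat) : nat := match j with O => nx O O | S j' => nx (S (sg j')) (S j') end).
  assert (Hsig : forall j, Rabs (s (sig j) - l) < 1 / (INR j + 1)).
  { intro j. destruct j; simpl; apply Hnx. }
  exists sig. split.
  - intro j. simpl. destruct (Hnx (S (sig j)) (S j)). lia.
  - exists l. intros e He. destruct (small_inv e He) as [N HN]. exists N. intros n Hn'.
    unfold Rdist. specialize (HN n Hn'). specialize (Hsig n). lra.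
Qed.

Definition bw_prop (s : nat -> R) (sig : nat -> nat) :=
  sinc sig /\ ((exists M, forall n, Rabs (s n) <= M) -> exists l, Un_cv (fun j => s (sig j)) l).

Lemma bw_prop_ex s : exists sig, bw_prop s sig.
Proof.
  destruct (classic (exists M, forall n, Rabs (s n) <= M)) as [[M HM]|NB].
  - destruct (BW_sub s M HM) as [sig [H1 H2]]. exists sig. split; auto.
  - exists (fun n => n). split. intro; lia. intro; contradiction.
Qed.

Definition bw_sub (s : nat -> R) : nat -> nat := epsilon (inhabits (fun n => n)) (bw_prop s).

Lemma bw_sub_spec s : bw_prop s (bw_sub s).
Proof. unfold bw_sub. apply epsilon_spec. apply bw_prop_ex. Qed.

Section DIAG.
Variable x : nat -> nat -> R.
Hypothesis xb : forall i, exists M, forall n, Rabs (x i n) <= M.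

Fixpoint psi (i : nat) : nat -> nat :=
  match i with
  | O => fun n => n
  | S i' => fun n => psi i' (bw_sub (fun k => x i' (psi i' k)) n)
  end.

Lemma psi_sinc i : sinc (psi i).
Proof.
  induction i. intro; simpl; lia.
  simpl. apply (sinc_comp (psi i) _ IHi). apply bw_sub_spec.
Qed.

Lemma psi_sub i k : (i <= k)%nat -> exists om, (forall j, (j <= om j)%nat) /\ forall n, psi k n = psi i (om n).
Proof.
  intro Hik. induction Hik.
  - exists (fun n => n). split; auto.
  - destruct IHHik as [om [Hom Hp]].
    exists (fun n => om (bw_sub (fun k => x m (psi m k)) n)). split.
    + intro j. pose proof (sinc_ge _ (proj1 (bw_sub_spec (fun k => x m (psi m k)))) j). specialize (Hom (bw_sub (fun k => x m (psi m k)) j)). lia.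
    + intro n. simpl. apply Hp.
Qed.

Definition phi (j : nat) : nat := psi (S j) j.

Lemma phi_sinc : sinc phi.
Proof.
  intro j. unfold phi. change (psi (S (S j)) (S j)) with (psi (S j) (bw_sub (fun k => x (S j) (psi (S j) k)) (S j))).
  apply sinc_mono. apply psi_sinc.
  pose proof (sinc_ge _ (proj1 (bw_sub_spec (fun k => x (S j) (psi (S j) k)))) (S j)). lia.
Qed.

Lemma phi_cv i : exists l, Un_cv (fun j => x i (phi j)) l.
Proof.
  destruct (proj2 (bw_sub_spec (fun k => x i (psi i k)))) as [l Hl].
  { destruct (xb i) as [M HM]. exists M. intro; apply HM. }
  exists l. intros e He. destruct (Hl e He) as [N HN]. exists (N + S i)%nat. intros j Hj.
  destruct (psi_sub (S i) (S j) ltac:(lia)) as [om [Hom Hp]].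
  unfold phi. rewrite Hp. simpl. apply HN. specialize (Hom j). lia.
Qed.

End DIAG.

Section WC.
Context {H : Hilbert}.

Lemma hnorm_minus_sym (x y : H) : hnorm (hminus x y) = hnorm (hminus y x).
Proof. unfold hnorm. f_equal. hexp. rewrite (hinner_sym x y). ring. Qed.

Lemma weak_compact (a : nat -> H) M : (forall n, hnorm (a n) <= M) ->
  exists ph x, sinc ph /\ weak_cv (fun j => a (ph j)) x.
Proof.
  intros Hb.
  assert (HM : 0 <= M) by (specialize (Hb O); pose proof (hnorm_pos (a O)); lra).
  set (x := fun i n => hinner (a n) (a i)).
  assert (xb : forall i, exists M, forall n, Rabs (x i n) <= M).
  { intro i. exists (M * M). intro n. unfold x. eapply Rle_trans; [apply CS|].
    apply Rmult_le_compat; auto using hnorm_pos. }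
  set (ph := phi x).
  exists ph.
  set (b := fun j => a (ph j)).
  set (S := fun y => exists l, Un_cv (fun j => hinner (b j) y) l).
  assert (SS : subspace S).
  { split; [|split].
    - exists 0. apply (Un_cv_ext (fun _ => 0)); [intro; rewrite hinner_zero_r; auto|apply CV_const].
    - intros y z [l1 H1] [l2 H2]. exists (l1 + l2). apply (Un_cv_ext (fun j => hinner (b j) y + hinner (b j) z)).
      intro; rewrite hinner_plus_r; auto. apply CV_plus; auto.
    - intros c y [l1 H1]. exists (c * l1). apply (Un_cv_ext (fun j => c * hinner (b j) y)).
      intro; rewrite hinner_scal_r; auto. apply (CV_mult (fun _ => c)); auto. apply CV_const. }
  assert (Sb : forall n, hnorm (b n) <= M) by (intro; apply Hb).
  assert (CS' : closedS S).
  { intros u y Hu Hy.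
    destruct (R_complete (fun j => hinner (b j) y)) as [l Hl]; [|exists l; auto].
    intros e He.
    destruct (Hy (e / (4 * M + 1))) as [n0 Hn0]. apply Rdiv_lt_0_compat; lra.
    specialize (Hn0 n0 (le_n _)).
    destruct (Hu n0) as [l0 Hl0].
    destruct (Hl0 (e / 4)) as [N HN]; [lra|]. exists N. intros j k Hj Hk.
    pose proof (HN j Hj) as A1. pose proof (HN k Hk) as A2. unfold Rdist in *.
    assert (B1 : Rabs (hinner (b j) y - hinner (b j) (u n0)) <= M * (e / (4 * M + 1))).
    { rewrite <- hinner_minus_r. eapply Rle_trans; [apply CS|].
      rewrite hnorm_minus_sym. apply Rmult_le_compat; auto using hnorm_pos. apply Rlt_le; auto. }
    assert (B2 : Rabs (hinner (b k) y - hinner (b k) (u n0)) <= M * (e / (4 * M + 1))).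
    { rewrite <- hinner_minus_r. eapply Rle_trans; [apply CS|].
      rewrite hnorm_minus_sym. apply Rmult_le_compat; auto using hnorm_pos. apply Rlt_le; auto. }
    assert (B3 : M * (e / (4 * M + 1)) <= e / 4).
    { apply Rmult_le_reg_r with (4 * M + 1); [lra|]. unfold Rdiv. field_simplify; [|lra]. lra. }
    apply Rabs_def2 in A1. apply Rabs_def2 in A2. apply Rabs_le_inv in B1. apply Rabs_le_inv in B2.
    apply Rabs_def1; lra. }
  assert (Sa : forall i, S (a i)).
  { intro i. destruct (phi_cv x xb i) as [l Hl]. exists l. exact Hl. }
  assert (Sall : forall y, S y).
  { intro y. destruct (proj_subspace S y SS CS') as [P [HP Ho]].
    destruct HP as [l Hl]. exists l. apply (Un_cv_ext (fun j => hinner (b j) P)); auto.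
    intro j. specialize (Ho (b j) (Sa _)). rewrite hinner_sym, hinner_minus_r in Ho. lra. }
  set (ell := fun y => epsilon (inhabits 0) (fun l => Un_cv (fun j => hinner (b j) y) l)).
  assert (Hell : forall y, Un_cv (fun j => hinner (b j) y) (ell y)).
  { intro y. unfold ell. apply epsilon_spec. apply Sall. }
  assert (Lin : linfun ell).
  { split.
    - intros y z. apply (UL_sequence (fun j => hinner (b j) (hplus y z))); auto.
      apply (Un_cv_ext (fun j => hinner (b j) y + hinner (b j) z)). intro; rewrite hinner_plus_r; auto.
      apply CV_plus; auto.
    - intros c y. apply (UL_sequence (fun j => hinner (b j) (hscal c y))); auto.
      apply (Un_cv_ext (fun j => c * hinner (b j) y)). intro; rewrite hinner_scal_r; auto.
      apply (CV_mult (fun _ => c)); auto. apply CV_const. }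
  assert (Bd : forall y, Rabs (ell y) <= M * hnorm y).
  { intro y. apply Rabs_le_of. split.
    - assert (- ell y <= M * hnorm y); [|lra].
      apply (lim_le (fun j => - hinner (b j) y)).
      pose proof (CV_mult (fun _ => -1) _ (-1) _ (CV_const (-1)) (Hell y)) as Hm.
      replace (- ell y) with (-1 * ell y) by ring.
      eapply Un_cv_ext; [|exact Hm]. intro; simpl; ring.
      intro j. pose proof (CS (b j) y). apply Rabs_le_inv in H0. pose proof (Sb j). pose proof (hnorm_pos y).
      assert (hnorm (b j) * hnorm y <= M * hnorm y) by (apply Rmult_le_compat_r; auto). lra.
    - apply (lim_le (fun j => hinner (b j) y)); auto.
      intro j. pose proof (CS (b j) y). pose proof (Rle_abs (hinner (b j) y)). pose proof (Sb j). pose proof (hnorm_pos y).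
      assert (hnorm (b j) * hnorm y <= M * hnorm y) by (apply Rmult_le_compat_r; auto). lra. }
  destruct (riesz ell M Lin Bd) as [xl Hx].
  exists xl. split. apply phi_sinc.
  intro y. rewrite <- Hx. apply Hell.
Qed.

End WC.

From Stdlib Require Import Reals Lra Lia Psatz Classical ClassicalEpsilon FunctionalExtensionality.
From Stdlib Require Fin.
Open Scope R_scope.

Lemma fsum_ext m (u v : Fin.t m -> R) : (forall i, u i = v i) -> fsum m u = fsum m v.
Proof. intro E. replace u with v; auto. apply functional_extensionality; intro; auto. Qed.

Lemma fsum_plus m (u v : Fin.t m -> R) : fsum m (fun i => u i + v i) = fsum m u + fsum m v.
Proof. induction m; simpl. ring. rewrite (IHm (fun i => u (Fin.FS i)) (fun i => v (Fin.FS i))). ring. Qed.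

Lemma fsum_scal m c (u : Fin.t m -> R) : fsum m (fun i => c * u i) = c * fsum m u.
Proof. induction m; simpl. ring. rewrite (IHm (fun i => u (Fin.FS i))). ring. Qed.

Lemma fsum_nonneg m (u : Fin.t m -> R) : (forall i, 0 <= u i) -> 0 <= fsum m u.
Proof. induction m; simpl; intro Hu. lra. pose proof (Hu Fin.F1). pose proof (IHm (fun i => u (Fin.FS i)) (fun i => Hu _)). lra. Qed.

Lemma fsum_ge_term m (u : Fin.t m -> R) i : (forall i, 0 <= u i) -> u i <= fsum m u.
Proof.
  induction m; intro Hu. inversion i.
  simpl. apply (Fin.caseS' i (fun i => u i <= u Fin.F1 + fsum m (fun i0 => u (Fin.FS i0)))).
  - pose proof (fsum_nonneg m (fun i => u (Fin.FS i)) (fun i => Hu _)). lra.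
  - intro p. pose proof (IHm (fun i => u (Fin.FS i)) p (fun i => Hu _)). pose proof (Hu Fin.F1). simpl in *. lra.
Qed.

Lemma fsum_cv0 m (h : Fin.t m -> nat -> R) : (forall i, Un_cv (h i) 0) -> Un_cv (fun n => fsum m (fun i => h i n)) 0.
Proof.
  induction m; intro Hh; simpl.
  - apply CV_const.
  - replace 0 with (0 + 0) by ring. apply CV_plus. apply Hh.
    apply (IHm (fun i => h (Fin.FS i))). intro; apply Hh.
Qed.

Section RMH.
Variable m : nat.

Lemma rm_plus_assoc (x y z : RM m) : rm_plus x (rm_plus y z) = rm_plus (rm_plus x y) z.
Proof. apply functional_extensionality; intro; unfold rm_plus; ring. Qed.
Lemma rm_plus_comm (x y : RM m) : rm_plus x y = rm_plus y x.
Proof. apply functional_extensionality; intro; unfold rm_plus; ring. Qed.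
Lemma rm_plus_zero_r (x : RM m) : rm_plus x rm_zero = x.
Proof. apply functional_extensionality; intro; unfold rm_plus, rm_zero; ring. Qed.
Lemma rm_plus_opp_r (x : RM m) : rm_plus x (rm_opp x) = rm_zero.
Proof. apply functional_extensionality; intro; unfold rm_plus, rm_opp, rm_zero; ring. Qed.
Lemma rm_scal_assoc a b (x : RM m) : rm_scal a (rm_scal b x) = rm_scal (a * b) x.
Proof. apply functional_extensionality; intro; unfold rm_scal; ring. Qed.
Lemma rm_scal_one (x : RM m) : rm_scal 1 x = x.
Proof. apply functional_extensionality; intro; unfold rm_scal; ring. Qed.
Lemma rm_scal_distr_l a (x y : RM m) : rm_scal a (rm_plus x y) = rm_plus (rm_scal a x) (rm_scal a y).
Proof. apply functional_extensionality; intro; unfold rm_scal, rm_plus; ring. Qed.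
Lemma rm_scal_distr_r a b (x : RM m) : rm_scal (a + b) x = rm_plus (rm_scal a x) (rm_scal b x).
Proof. apply functional_extensionality; intro; unfold rm_scal, rm_plus; ring. Qed.
Lemma rm_inner_sym (x y : RM m) : rm_inner x y = rm_inner y x.
Proof. unfold rm_inner. apply fsum_ext; intro; ring. Qed.
Lemma rm_inner_plus_l (x y z : RM m) : rm_inner (rm_plus x y) z = rm_inner x z + rm_inner y z.
Proof. unfold rm_inner, rm_plus. rewrite <- fsum_plus. apply fsum_ext; intro; ring. Qed.
Lemma rm_inner_scal_l a (x y : RM m) : rm_inner (rm_scal a x) y = a * rm_inner x y.
Proof. unfold rm_inner, rm_scal. rewrite <- fsum_scal. apply fsum_ext; intro; ring. Qed.
Lemma rm_inner_pos (x : RM m) : 0 <= rm_inner x x.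
Proof. apply fsum_nonneg. intro; apply Rle_0_sqr. Qed.
Lemma rm_comp_sq (x : RM m) i : x i * x i <= rm_inner x x.
Proof. apply (fsum_ge_term m (fun i => x i * x i)). intro; apply Rle_0_sqr. Qed.
Lemma rm_inner_def (x : RM m) : rm_inner x x = 0 -> x = rm_zero.
Proof.
  intro E. apply functional_extensionality; intro i. unfold rm_zero.
  pose proof (rm_comp_sq x i). pose proof (Rle_0_sqr (x i)). unfold Rsqr in *.
  assert (x i * x i = 0) by lra. apply Rmult_integral in H1. destruct H1; auto.
Qed.

Lemma rm_comp_le (x : RM m) i : Rabs (x i) <= sqrt (rm_inner x x).
Proof. rewrite <- sqrt_Rsqr_abs. apply sqrt_le_1_alt. apply rm_comp_sq. Qed.

Lemma rm_complete : forall u : nat -> RM m,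
    (forall eps, 0 < eps -> exists N, forall n k, (N <= n)%nat -> (N <= k)%nat ->
        sqrt (rm_inner (rm_plus (u n) (rm_opp (u k))) (rm_plus (u n) (rm_opp (u k)))) < eps) ->
    exists l, forall eps, 0 < eps -> exists N, forall n, (N <= n)%nat ->
        sqrt (rm_inner (rm_plus (u n) (rm_opp l)) (rm_plus (u n) (rm_opp l))) < eps.
Proof.
  intros u Hu.
  assert (Hc : forall i, Cauchy_crit (fun n => u n i)).
  { intros i e He. destruct (Hu e He) as [N HN]. exists N. intros n k Hn Hk. unfold Rdist.
    eapply Rle_lt_trans; [|apply (HN n k Hn Hk)].
    apply (rm_comp_le (rm_plus (u n) (rm_opp (u k))) i). }
  set (l := fun i => proj1_sig (R_complete _ (Hc i))).
  assert (Hl : forall i, Un_cv (fun n => u n i) (l i)) by (intro i; exact (proj2_sig (R_complete _ (Hc i)))).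
  exists l.
  assert (C0 : Un_cv (fun n => rm_inner (rm_plus (u n) (rm_opp l)) (rm_plus (u n) (rm_opp l))) 0).
  { apply (fsum_cv0 m (fun i n => (u n i + - l i) * (u n i + - l i))). intro i.
    replace 0 with ((l i + - l i) * (l i + - l i)) by ring.
    apply CV_mult; apply CV_plus; auto; apply CV_const. }
  intros e He. destruct (C0 (e * e)) as [N HN]. nra. exists N. intros n Hn. specialize (HN n Hn).
  unfold Rdist in HN. rewrite Rminus_0_r in HN. apply Rabs_def2 in HN.
  rewrite <- (sqrt_square e) by lra. apply sqrt_lt_1_alt. split; [apply rm_inner_pos|]. lra.
Qed.

Definition RMH : Hilbert := {|
  hcar := RM m; hzero := rm_zero; hplus := rm_plus; hopp := rm_opp; hscal := rm_scal; hinner := rm_inner;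
  hplus_assoc := rm_plus_assoc; hplus_comm := rm_plus_comm; hplus_zero_r := rm_plus_zero_r;
  hplus_opp_r := rm_plus_opp_r; hscal_assoc := rm_scal_assoc; hscal_one := rm_scal_one;
  hscal_distr_l := rm_scal_distr_l; hscal_distr_r := rm_scal_distr_r; hinner_sym := rm_inner_sym;
  hinner_plus_l := rm_inner_plus_l; hinner_scal_l := rm_inner_scal_l; hinner_pos := rm_inner_pos;
  hinner_def := rm_inner_def; hcomplete := rm_complete |}.

End RMH.

From Stdlib Require Import Reals Lra Lia Psatz Classical ClassicalEpsilon FunctionalExtensionality.
From Stdlib Require Fin.
Open Scope R_scope.

Definition rb (r : Rbar) : R := match r with Finite x => x | _ => 0 end.

Lemma Rbar_sup_ub E s t : Rbar_sup E = Finite s -> E t -> t <= s.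
Proof.
  unfold Rbar_sup. destruct (excluded_middle_informative (exists x, E x)) as [ne|ne]; [|discriminate].
  destruct (excluded_middle_informative (bound E)) as [b|b]; [|discriminate].
  destruct (completeness E b ne) as [s0 [Hub Hlub]]. simpl. intros Hs Ht. inversion Hs; subst. apply Hub; auto.
Qed.

Lemma Rbar_sup_le E b : (forall t, E t -> t <= b) -> Rbar_le (Rbar_sup E) (Finite b).
Proof.
  intro Hb. unfold Rbar_sup. destruct (excluded_middle_informative (exists x, E x)) as [ne|ne]; [|simpl; auto].
  destruct (excluded_middle_informative (bound E)) as [bd|bd].
  - destruct (completeness E bd ne) as [s0 [Hub Hlub]]. simpl. apply Hlub. intros t Ht; apply Hb; auto.
  - exfalso. apply bd. exists b. intros t Ht; apply Hb; auto.
Qed.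

Lemma Rbar_sup_ge E t : E t -> Rbar_le (Finite t) (Rbar_sup E).
Proof.
  intro Ht. unfold Rbar_sup. destruct (excluded_middle_informative (exists x, E x)) as [ne|ne].
  - destruct (excluded_middle_informative (bound E)) as [bd|bd]; simpl; auto.
    destruct (completeness E bd ne) as [s0 [Hub Hlub]]. simpl. apply Hub; auto.
  - exfalso; apply ne; exists t; auto.
Qed.

Lemma Rbar_sup_attained E e : E e -> (forall t, E t -> t <= e) -> Rbar_sup E = Finite e.
Proof.
  intros He Hb. unfold Rbar_sup. destruct (excluded_middle_informative (exists x, E x)) as [ne|ne].
  - destruct (excluded_middle_informative (bound E)) as [bd|bd].
    + destruct (completeness E bd ne) as [s0 [Hub Hlub]]. simpl. f_equal.
      apply Rle_antisym. apply Hlub. intros t Ht; apply Hb; auto. apply Hub; auto.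
    + exfalso. apply bd. exists e. intros t Ht; apply Hb; auto.
  - exfalso; apply ne; exists e; auto.
Qed.

Lemma Rbar_inf_attained E e : E e -> (forall t, E t -> e <= t) -> Rbar_inf E = Finite e.
Proof.
  intros He Hb. unfold Rbar_inf. rewrite (Rbar_sup_attained _ (- e)).
  - simpl. f_equal. ring.
  - rewrite Ropp_involutive. auto.
  - intros t Ht. specialize (Hb _ Ht). lra.
Qed.

Lemma Rbar_le_finite_r a b : a <> m_infty -> Rbar_le a (Finite b) -> exists r, a = Finite r /\ r <= b.
Proof. intros Ha Hle. destruct a; simpl in *; try contradiction; eauto. Qed.

Lemma Rbar_plus_le a b x y : Rbar_le a (Finite x) -> Rbar_le b (Finite y) -> Rbar_le (Rbar_plus a b) (Finite (x + y)).
Proof. destruct a, b; simpl; intros; try contradiction; auto. lra. Qed.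

Lemma Rbar_plus_ge a b x y : Rbar_le (Finite x) a -> Rbar_le (Finite y) b -> Rbar_le (Finite (x + y)) (Rbar_plus a b).
Proof. destruct a, b; simpl; intros; try contradiction; auto. lra. Qed.

Section RMlem.
Variable m : nat.
Lemma rm_inner_plus_r (x y z : RM m) : rm_inner x (rm_plus y z) = rm_inner x y + rm_inner x z.
Proof. exact (hinner_plus_r (H := RMH m) x y z). Qed.
Lemma rm_inner_scal_r a (x y : RM m) : rm_inner x (rm_scal a y) = a * rm_inner x y.
Proof. exact (hinner_scal_r (H := RMH m) a x y). Qed.
Lemma rm_inner_minus_l (x y z : RM m) : rm_inner (rm_minus x y) z = rm_inner x z - rm_inner y z.
Proof. exact (hinner_minus_l (H := RMH m) x y z). Qed.
Lemma rm_inner_minus_r (x y z : RM m) : rm_inner z (rm_minus x y) = rm_inner z x - rm_inner z y.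
Proof. exact (hinner_minus_r (H := RMH m) x y z). Qed.
Lemma rm_inner_zero_l (x : RM m) : rm_inner rm_zero x = 0.
Proof. exact (hinner_zero_l (H := RMH m) x). Qed.
Lemma rm_inner_opp_l (x y : RM m) : rm_inner (rm_opp x) y = - rm_inner x y.
Proof. exact (hinner_opp_l (H := RMH m) x y). Qed.
Lemma rm_CS (x y : RM m) : rm_inner x y <= rm_norm x * rm_norm y.
Proof. exact (CS_le (H := RMH m) x y). Qed.
Lemma rm_norm_sq (x : RM m) : rm_norm x * rm_norm x = rm_inner x x.
Proof. exact (hnorm_sq (H := RMH m) x). Qed.
Lemma rm_norm_pos (x : RM m) : 0 <= rm_norm x.
Proof. apply sqrt_pos. Qed.
End RMlem.

Section LSC.
Context {H : Hilbert}.

Lemma lsc_seq (h : H -> Rbar) (u : nat -> H) x (r s : nat -> R) sl :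
  lscH h -> (forall y, h y <> m_infty) -> cvH u x ->
  (forall n, h (u n) = Finite (r n)) -> (forall n, r n <= s n) -> Un_cv s sl ->
  exists rx, h x = Finite rx /\ rx <= sl.
Proof.
  intros Hl Hp Hu Hr Hrs Hs.
  destruct (h x) as [rx| |] eqn:E.
  - destruct (Rle_or_lt rx sl) as [Hle|Hlt]. eauto.
    exfalso. destruct (Hl x ((rx + sl) / 2)) as [d [Hd Hnb]]. rewrite E; simpl; lra.
    destruct (Hu d Hd) as [N1 HN1]. destruct (Hs ((rx - sl) / 2)) as [N2 HN2]; [lra|].
    specialize (Hnb (u (N1 + N2)%nat) (HN1 (N1 + N2)%nat ltac:(lia))). rewrite Hr in Hnb. simpl in Hnb.
    specialize (HN2 (N1 + N2)%nat ltac:(lia)). specialize (Hrs (N1 + N2)%nat).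
    unfold Rdist in HN2. apply Rabs_def2 in HN2. lra.
  - exfalso. destruct (Hl x (sl + 1)) as [d [Hd Hnb]]. rewrite E; simpl; auto.
    destruct (Hu d Hd) as [N1 HN1]. destruct (Hs 1) as [N2 HN2]; [lra|].
    specialize (Hnb (u (N1 + N2)%nat) (HN1 (N1 + N2)%nat ltac:(lia))). rewrite Hr in Hnb. simpl in Hnb.
    specialize (HN2 (N1 + N2)%nat ltac:(lia)). specialize (Hrs (N1 + N2)%nat).
    unfold Rdist in HN2. apply Rabs_def2 in HN2. lra.
  - exfalso. apply (Hp x E).
Qed.

Lemma strong_min (D : H -> Prop) (F : H -> R) c (xs : H) : 0 < c -> SC D F c -> D xs -> (forall y, D y -> F xs <= F y) ->
  forall y, D y -> F xs + c * Nm (hminus y xs) <= F y.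
Proof.
  intros Hc HSC Hxs Hmin y Hy.
  assert (Hall : forall t, 0 < t <= 1 -> F xs <= F y - c * (1 - t) * Nm (hminus y xs)).
  { intros t Ht. destruct (HSC y xs t Hy Hxs ltac:(lra)) as [Dz Fz]. specialize (Hmin _ Dz).
    apply Rmult_le_reg_l with t; [lra|]. nra. }
  pose proof (Nm_pos (hminus y xs)). set (N := Nm (hminus y xs)) in *.
  apply Rnot_lt_le. intro Hlt. set (del := F xs + c * N - F y).
  assert (Hdel : 0 < del) by (unfold del; lra).
  assert (HN : 0 < N). { destruct (Req_dec N 0) as [E0|E0]. rewrite E0 in Hlt. specialize (Hall 1 ltac:(lra)). lra. lra. }
  set (t := Rmin 1 (del / (2 * c * N))).
  assert (0 < del / (2 * c * N)) by (apply Rdiv_lt_0_compat; [lra| nra]).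
  assert (Ht : 0 < t <= 1) by (unfold t; split; [apply Rmin_glb_lt; lra| apply Rmin_l]).
  specialize (Hall t Ht). assert (t <= del / (2 * c * N)) by apply Rmin_r.
  assert (c * t * N <= del / 2).
  { replace (del / 2) with (c * (del / (2 * c * N)) * N) by fld.
    apply Rmult_le_compat_r; [lra|]. apply Rmult_le_compat_l; lra. }
  unfold del in *. nra.
Qed.

End LSC.

From Stdlib Require Import Reals Lra Lia Psatz Classical ClassicalEpsilon FunctionalExtensionality.
From Stdlib Require Fin.
Open Scope R_scope.

Section PB.
Context {H : Hilbert} {m : nat} (f : H -> Rbar) (g : RM m -> Rbar) (A : H -> RM m).
Variable (mu nA Df : R).
Hypothesis (Hf_proper : properH f) (Hf_convex : convexH f) (Hf_lsc : lscH f).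
Hypothesis (Hmu : 0 < mu) (Hg_proper : properRM g) (Hg_lsc : lscRM g) (Hg_sc : strongly_convexRM mu g).
Hypothesis (HA_lin : linear_op A).
Hypothesis (HnA : Rbar_sup (fun t => exists x : H, hnorm x <= 1 /\ t = rm_norm (A x)) = Finite nA).
Hypothesis (HDf : Rbar_sup (fun t => exists x, domH f x /\ t = 1 / 2 * (hnorm x) ^ 2) = Finite Df).

Lemma A_scal a x : A (hscal a x) = rm_scal a (A x).
Proof. apply HA_lin. Qed.
Lemma A_plus x y : A (hplus x y) = rm_plus (A x) (A y).
Proof. apply HA_lin. Qed.
Lemma A_zero : A hzero = rm_zero.
Proof. rewrite <- (hscal_zero hzero), A_scal. apply functional_extensionality; intro; unfold rm_scal, rm_zero; ring. Qed.
Lemma A_minus x y : A (hminus x y) = rm_minus (A x) (A y).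
Proof. unfold hminus. rewrite A_plus, hopp_scal, A_scal. apply functional_extensionality; intro; unfold rm_plus, rm_scal, rm_minus; ring. Qed.

Lemma nA_pos : 0 <= nA.
Proof.
  assert (Hle : rm_norm (A hzero) <= nA).
  { apply (Rbar_sup_ub _ _ (rm_norm (A hzero)) HnA). exists hzero. split; auto.
    unfold hnorm. rewrite hinner_zero_l, sqrt_0. lra. }
  rewrite A_zero in Hle. unfold rm_norm in Hle. rewrite rm_inner_zero_l, sqrt_0 in Hle. lra.
Qed.

Lemma A_bound x : rm_norm (A x) <= nA * hnorm x.
Proof.
  destruct (Req_dec (hnorm x) 0) as [E0|E0].
  - apply hnorm_zero_iff in E0. subst. rewrite A_zero. unfold rm_norm. rewrite rm_inner_zero_l, sqrt_0.
    pose proof nA_pos. pose proof (hnorm_pos (H:=H) hzero). nra.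
  - pose proof (hnorm_pos x).
    assert (Hx1 : hnorm (hscal (1 / hnorm x) x) <= 1).
    { rewrite hnorm_scal, Rabs_right. right; field; auto. apply Rle_ge, Rlt_le, Rdiv_lt_0_compat; lra. }
    pose proof (Rbar_sup_ub _ _ _ HnA (ex_intro _ _ (conj Hx1 eq_refl))) as Hb.
    rewrite A_scal in Hb. change (rm_norm (rm_scal (1 / hnorm x) (A x))) with (hnorm (H := RMH m) (@hscal (RMH m) (1 / hnorm x) (A x))) in Hb.
    rewrite hnorm_scal, Rabs_right in Hb by (apply Rle_ge, Rlt_le, Rdiv_lt_0_compat; lra).
    change (hnorm (H := RMH m) (A x)) with (rm_norm (A x)) in Hb.
    apply Rmult_le_reg_l with (1 / hnorm x). apply Rdiv_lt_0_compat; lra.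
    replace (1 / hnorm x * (nA * hnorm x)) with nA by fld. lra.
Qed.

Lemma dom_Df x : domH f x -> Nm x <= 2 * Df.
Proof.
  intro Hx. pose proof (Rbar_sup_ub _ _ _ HDf (ex_intro _ x (conj Hx eq_refl))). rewrite hnorm_pow2 in H0. lra.
Qed.

Lemma cv_A_inner p (u : nat -> H) x : cvH u x -> Un_cv (fun n => rm_inner p (A (u n))) (rm_inner p (A x)).
Proof.
  intros Hu e He.
  destruct (Hu (e / (rm_norm p * nA + 1))) as [N HN].
  { apply Rdiv_lt_0_compat; [lra|]. pose proof nA_pos. pose proof (rm_norm_pos m p). nra. }
  exists N. intros n Hn. specialize (HN n Hn). unfold Rdist.
  rewrite <- rm_inner_minus_r, <- A_minus.
  change (rm_inner p (A (hminus (u n) x))) with (@hinner (RMH m) p (A (hminus (u n) x))).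
  eapply Rle_lt_trans; [apply CS|]. change (hnorm (H:=RMH m) (A (hminus (u n) x))) with (rm_norm (A (hminus (u n) x))).
  pose proof (A_bound (hminus (u n) x)). pose proof nA_pos. pose proof (rm_norm_pos m p).
  pose proof (hnorm_pos (hminus (u n) x)). change (hnorm (H := RMH m) p) with (rm_norm p).
  apply Rle_lt_trans with (rm_norm p * (nA * hnorm (hminus (u n) x))). apply Rmult_le_compat_l; auto.
  apply Rle_lt_trans with ((rm_norm p * nA + 1) * hnorm (hminus (u n) x)). nra.
  apply Rmult_lt_reg_l with (/ (rm_norm p * nA + 1)). apply Rinv_0_lt_compat; nra.
  rewrite <- Rmult_assoc, Rinv_l by nra. unfold Rdiv in HN. lra.
Qed.

(* ---- the function minimized by x_{f,p} ---- *)
Definition Fp (rho : R) (p : RM m) (x : H) : R := rb (f x) - rm_inner p (A x) + rho / 2 * Nm x.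

Lemma Nm_conv (x y : H) t : Nm (hplus (hscal t x) (hscal (1 - t) y)) = t * Nm x + (1 - t) * Nm y - t * (1 - t) * Nm (hminus x y).
Proof. hexp. rewrite (hinner_sym y x). ring. Qed.

Lemma Fp_SC rho p : 0 < rho -> SC (domH f) (Fp rho p) (rho / 2).
Proof.
  intros Hr x y t [fx Hx] [fy Hy] Ht.
  pose proof (Hf_convex x y fx fy t Hx Hy Ht) as Hc.
  destruct (Rbar_le_finite_r _ _ (proj1 Hf_proper _) Hc) as [fz [Hz Hfz]].
  split. exists fz; auto.
  unfold Fp. rewrite Hx, Hy, Hz, A_plus, !A_scal, Nm_conv. simpl.
  rewrite rm_inner_plus_r, !rm_inner_scal_r. nra.
Qed.

Lemma Fp_closed rho p : 0 < rho -> SeqClosed (domH f) (Fp rho p).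
Proof.
  intros Hr u x a Hu Hx Ha.
  assert (Hr' : forall n, exists r, f (u n) = Finite r) by exact Hu.
  apply choice_nat in Hr'. destruct Hr' as [r Hrn].
  destruct (lsc_seq f u x r (fun n => a + rm_inner p (A (u n)) - rho / 2 * Nm (u n))
              (a + rm_inner p (A x) - rho / 2 * Nm x) Hf_lsc (proj1 Hf_proper) Hx Hrn) as [rx [Hrx Hle]].
  - intro n. specialize (Ha n). unfold Fp in Ha. rewrite Hrn in Ha. simpl in Ha. lra.
  - apply CV_minus. apply CV_plus. apply CV_const. apply cv_A_inner; auto.
    apply (CV_mult (fun _ => rho / 2)). apply CV_const. apply cvH_Nm; auto.
  - split. exists rx; auto. unfold Fp. rewrite Hrx. simpl. lra.
Qed.

Lemma xf_spec rho p : 0 < rho ->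
  domH f (xf f A rho p) /\
  forall x' fx', f x' = Finite fx' ->
    rm_inner p (A x') - fx' - rho / 2 * Nm x' <= rm_inner p (A (xf f A rho p)) - rb (f (xf f A rho p)) - rho / 2 * Nm (xf f A rho p).
Proof.
  intro Hr.
  assert (Ex : exists x, exists fx, f x = Finite fx /\ forall x' fx', f x' = Finite fx' ->
      rm_inner p (A x') - fx' - rho / 2 * (hnorm x') ^ 2 <= rm_inner p (A x) - fx - rho / 2 * (hnorm x) ^ 2).
  { destruct (min_exists (domH f) (Fp rho p) (rho / 2)) as [x [[fx Hx] Hmin]].
    lra. apply Fp_SC; auto. apply Fp_closed; auto. apply (proj2 Hf_proper).
    exists x, fx. split; auto. intros x' fx' Hx'. specialize (Hmin x' (ex_intro _ fx' Hx')).
    unfold Fp in Hmin. rewrite Hx, Hx' in Hmin. simpl in Hmin. rewrite !hnorm_pow2. lra. }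
  pose proof (epsilon_spec (inhabits hzero) _ Ex) as Hs. fold (xf f A rho p) in Hs.
  destruct Hs as [fx [Hfx Hopt]]. split. exists fx; auto.
  intros x' fx' Hx'. specialize (Hopt x' fx' Hx'). rewrite !hnorm_pow2 in Hopt. rewrite Hfx. simpl. lra.
Qed.

Lemma xf_strong rho p : 0 < rho -> forall x, domH f x ->
  Fp rho p (xf f A rho p) + rho / 2 * Nm (hminus x (xf f A rho p)) <= Fp rho p x.
Proof.
  intros Hr. destruct (xf_spec rho p Hr) as [Hd Hopt].
  apply strong_min. lra. apply Fp_SC; auto. auto.
  intros y [fy Hy]. specialize (Hopt y fy Hy). unfold Fp. rewrite Hy. simpl. lra.
Qed.

(* ---- the function minimized by x_{g,p} ---- *)
Definition Gp (p : RM m) (y : RM m) : R := rm_inner p y + rb (g y).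

Lemma Gp_SC p : SC (H := RMH m) (domRM g) (Gp p) (mu / 2).
Proof.
  intros x y t [gx Hx] [gy Hy] Ht.
  pose proof (Hg_sc x y gx gy t Hx Hy Ht) as Hc.
  destruct (Rbar_le_finite_r _ _ (proj1 Hg_proper _) Hc) as [gz [Hz Hgz]].
  split. exists gz; auto.
  unfold Gp. change (rm_plus (rm_scal t x) (rm_scal (1 - t) y)) with (@hplus (RMH m) (@hscal (RMH m) t x) (@hscal (RMH m) (1-t) y)) in Hz.
  rewrite Hz. rewrite Hx, Hy. cbn [rb].
  change (rm_inner p) with (@hinner (RMH m) p).
  rewrite hinner_plus_r, !hinner_scal_r.
  change (rm_norm (rm_minus x y)) with (hnorm (H := RMH m) (hminus (H := RMH m) x y)) in Hgz. rewrite hnorm_pow2 in Hgz.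
  nra.
Qed.

Lemma Gp_closed p : SeqClosed (H := RMH m) (domRM g) (Gp p).
Proof.
  intros u x a Hu Hx Ha.
  assert (Hr' : forall n, exists r, g (u n) = Finite r) by exact Hu.
  apply choice_nat in Hr'. destruct Hr' as [r Hrn].
  destruct (lsc_seq (H := RMH m) g u x r (fun n => a - rm_inner p (u n)) (a - rm_inner p x) Hg_lsc (proj1 Hg_proper) Hx Hrn) as [rx [Hrx Hle]].
  - intro n. specialize (Ha n). unfold Gp in Ha. rewrite Hrn in Ha. simpl in Ha. lra.
  - apply CV_minus. apply CV_const.
    apply (Un_cv_ext (fun n => @hinner (RMH m) (u n) p)). intro; apply rm_inner_sym.
    rewrite rm_inner_sym. apply (cvH_inner (H := RMH m)); auto.
  - split. exists rx; auto. unfold Gp. rewrite Hrx. simpl. lra.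
Qed.

Lemma xg_spec p :
  domRM g (xg g p) /\
  forall y' gy', g y' = Finite gy' -> rm_inner p (xg g p) + rb (g (xg g p)) <= rm_inner p y' + gy'.
Proof.
  assert (Ex : exists y, exists gy, g y = Finite gy /\
    forall y' gy', g y' = Finite gy' -> rm_inner p y + gy <= rm_inner p y' + gy').
  { destruct (min_exists (H := RMH m) (domRM g) (Gp p) (mu / 2)) as [y [[gy Hy] Hmin]].
    lra. apply Gp_SC; auto. apply Gp_closed; auto. apply (proj2 Hg_proper).
    exists y, gy. split; auto. intros y' gy' Hy'. specialize (Hmin y' (ex_intro _ gy' Hy')).
    unfold Gp in Hmin. rewrite Hy, Hy' in Hmin. simpl in Hmin. lra. }
  pose proof (epsilon_spec (inhabits rm_zero) _ Ex) as Hs. fold (xg g p) in Hs.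
  destruct Hs as [gy [Hgy Hopt]]. split. exists gy; auto.
  intros y' gy' Hy'. specialize (Hopt y' gy' Hy'). rewrite Hgy. simpl. lra.
Qed.

Lemma xg_strong p : forall y, domRM g y ->
  Gp p (xg g p) + mu / 2 * Nm (H := RMH m) (hminus (H := RMH m) y (xg g p)) <= Gp p y.
Proof.
  destruct (xg_spec p) as [Hd Hopt].
  apply (strong_min (H := RMH m)). lra. apply Gp_SC; auto. auto.
  intros y [gy Hy]. specialize (Hopt y gy Hy). unfold Gp. rewrite Hy. simpl. lra.
Qed.

End PB.

From Stdlib Require Import Reals Lra Lia Psatz Classical ClassicalEpsilon FunctionalExtensionality.
From Stdlib Require Fin.
Open Scope R_scope.

Section PB2.
Context {H : Hilbert} {m : nat} (f : H -> Rbar) (g : RM m -> Rbar) (A : H -> RM m).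
Variable (mu nA Df : R).
Hypothesis (Hf_proper : properH f) (Hf_convex : convexH f) (Hf_lsc : lscH f).
Hypothesis (Hmu : 0 < mu) (Hg_proper : properRM g) (Hg_lsc : lscRM g) (Hg_sc : strongly_convexRM mu g).
Hypothesis (HA_lin : linear_op A).
Hypothesis (HnA : Rbar_sup (fun t => exists x : H, hnorm x <= 1 /\ t = rm_norm (A x)) = Finite nA).
Hypothesis (HDf : Rbar_sup (fun t => exists x, domH f x /\ t = 1 / 2 * (hnorm x) ^ 2) = Finite Df).

Definition Fv rho p := rm_inner p (A (xf f A rho p)) - rb (f (xf f A rho p)) - rho / 2 * Nm (xf f A rho p).
Definition Gv p := - (rm_inner p (xg g p) + rb (g (xg g p))).
Definition T rho p := Fv rho p + Gv p.

Lemma dom_rb x : domH f x -> f x = Finite (rb (f x)).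
Proof. intros [r Hr]. rewrite Hr. reflexivity. Qed.
Lemma domg_rb y : domRM g y -> g y = Finite (rb (g y)).
Proof. intros [r Hr]. rewrite Hr. reflexivity. Qed.

Lemma T_LB rho p q : 0 < rho -> T rho p + rm_inner (rm_minus q p) (grad_theta_rho f g A rho p) <= T rho q.
Proof.
  intro Hr. unfold T, Fv, Gv, grad_theta_rho.
  destruct (xf_spec f A nA Hf_proper Hf_convex Hf_lsc HA_lin HnA rho q Hr) as [_ Hq].
  destruct (xf_spec f A nA Hf_proper Hf_convex Hf_lsc HA_lin HnA rho p Hr) as [Hdp _].
  specialize (Hq _ _ (dom_rb _ Hdp)).
  destruct (xg_spec g mu Hmu Hg_proper Hg_lsc Hg_sc q) as [_ Hgq].
  destruct (xg_spec g mu Hmu Hg_proper Hg_lsc Hg_sc p) as [Hdg _].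
  specialize (Hgq _ _ (domg_rb _ Hdg)).
  rewrite rm_inner_minus_l, !rm_inner_minus_r. lra.
Qed.

Lemma amgm a b r : 0 < r -> a * b <= r / 2 * (b * b) + a * a / (2 * r).
Proof.
  intro Hr. assert (0 <= (r * b - a) * (r * b - a) / (2 * r)).
  { apply Rmult_le_pos. apply Rle_0_sqr. left. apply Rinv_0_lt_compat. lra. }
  replace ((r * b - a) * (r * b - a) / (2 * r)) with (r / 2 * (b * b) + a * a / (2 * r) - a * b) in H0 by fld. lra.
Qed.

Lemma T_UB rho p q : 0 < rho ->
  T rho q <= T rho p + rm_inner (rm_minus q p) (grad_theta_rho f g A rho p) + (nA ^ 2 / rho + 1 / mu) / 2 * rm_inner (rm_minus q p) (rm_minus q p).
Proof.
  intro Hr. unfold T, Fv, Gv, grad_theta_rho.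
  set (xp := xf f A rho p). set (xq := xf f A rho q). set (yp := xg g p). set (yq := xg g q).
  destruct (xf_spec f A nA Hf_proper Hf_convex Hf_lsc HA_lin HnA rho q Hr) as [Hdq _].
  pose proof (xf_strong f A nA Hf_proper Hf_convex Hf_lsc HA_lin HnA rho p Hr xq Hdq) as Sf.
  fold xp in Sf. unfold Fp in Sf.
  destruct (xg_spec g mu Hmu Hg_proper Hg_lsc Hg_sc q) as [Hdgq _].
  pose proof (xg_strong g mu Hmu Hg_proper Hg_lsc Hg_sc p yq Hdgq) as Sg.
  fold yp in Sg. unfold Gp in Sg.
  change (Nm (H := RMH m) (hminus (H := RMH m) yq yp)) with (rm_inner (rm_minus yq yp) (rm_minus yq yp)) in Sg.
  assert (C1 : rm_inner (rm_minus q p) (A (hminus xq xp)) <= rho / 2 * Nm (hminus xq xp) + nA ^ 2 / (2 * rho) * rm_inner (rm_minus q p) (rm_minus q p)).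
  { eapply Rle_trans. apply rm_CS. pose proof (A_bound A nA HA_lin HnA (hminus xq xp)).
    pose proof (rm_norm_pos m (rm_minus q p)). pose proof (nA_pos A nA HA_lin HnA).
    eapply Rle_trans. apply Rmult_le_compat_l; [auto|exact H0].
    replace (rm_norm (rm_minus q p) * (nA * hnorm (hminus xq xp))) with ((nA * rm_norm (rm_minus q p)) * hnorm (hminus xq xp)) by ring.
    eapply Rle_trans. apply (amgm _ _ rho Hr). rewrite hnorm_sq, <- rm_norm_sq. right. field. lra. }
  assert (C2 : - rm_inner (rm_minus q p) (rm_minus yq yp) <= mu / 2 * rm_inner (rm_minus yq yp) (rm_minus yq yp) + 1 / (2 * mu) * rm_inner (rm_minus q p) (rm_minus q p)).
  { assert (E : - rm_inner (rm_minus q p) (rm_minus yq yp) = rm_inner (rm_minus q p) (rm_minus yp yq)).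
    { rewrite !rm_inner_minus_r. ring. }
    rewrite E. eapply Rle_trans. apply rm_CS.
    replace (rm_norm (rm_minus yp yq)) with (rm_norm (rm_minus yq yp)).
    eapply Rle_trans. apply (amgm _ _ mu Hmu). rewrite !rm_norm_sq. right. field. lra.
    unfold rm_norm. f_equal. rewrite !rm_inner_minus_l, !rm_inner_minus_r, (rm_inner_sym m yq yp). ring. }
  rewrite A_minus in C1 by auto.
  set (N := rm_inner (rm_minus q p) (rm_minus q p)) in *.
  set (NY := rm_inner (rm_minus yq yp) (rm_minus yq yp)) in *.
  set (NX := Nm (hminus xq xp)) in *.
  replace ((nA ^ 2 / rho + 1 / mu) / 2 * N) with (nA ^ 2 / (2 * rho) * N + 1 / (2 * mu) * N) by fld.
  set (a1 := rho / 2 * NX) in *. set (a2 := mu / 2 * NY) in *. set (a3 := nA ^ 2 / (2 * rho) * N) in *.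
  set (a4 := 1 / (2 * mu) * N) in *. set (b1 := rho / 2 * Nm xp) in *. set (b2 := rho / 2 * Nm xq) in *.
  rewrite rm_inner_minus_r in C1, C2. rewrite !rm_inner_minus_l in C1, C2. rewrite !rm_inner_minus_r, !rm_inner_minus_l.
  lra.
Qed.

Lemma f_lower : exists fmin, forall x r, f x = Finite r -> fmin <= r.
Proof.
  destruct (SC_lower (domH f) (Fp f A 2 rm_zero) 1) as [b Hb]. lra.
  replace 1 with (2 / 2) by field. apply Fp_SC; auto; lra.
  apply Fp_closed with nA; auto; lra. apply (proj2 Hf_proper).
  exists (b - 2 * Df). intros x r Hx. specialize (Hb x (ex_intro _ r Hx)).
  unfold Fp in Hb. rewrite Hx, rm_inner_zero_l in Hb. simpl in Hb.
  pose proof (dom_Df f Df HDf x (ex_intro _ r Hx)). lra.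
Qed.

Lemma Rbar_le_fin_trans x y a : Rbar_le (Finite x) a -> y <= x -> Rbar_le (Finite y) a.
Proof. destruct a; simpl; auto. lra. Qed.

Lemma theta_up rho p : 0 < rho -> Rbar_le (theta f g A p) (Finite (T rho p + rho * Df)).
Proof.
  intro Hr. unfold theta, T. replace (Fv rho p + Gv p + rho * Df) with ((Fv rho p + rho * Df) + Gv p) by ring.
  apply Rbar_plus_le.
  - apply Rbar_sup_le. intros t [x [fx [Hx ->]]].
    destruct (xf_spec f A nA Hf_proper Hf_convex Hf_lsc HA_lin HnA rho p Hr) as [_ Hq].
    specialize (Hq _ _ Hx). pose proof (dom_Df f Df HDf x (ex_intro _ fx Hx)). unfold Fv. nra.
  - apply Rbar_sup_le. intros t [y [gy [Hy ->]]].
    destruct (xg_spec g mu Hmu Hg_proper Hg_lsc Hg_sc p) as [_ Hq].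
    specialize (Hq _ _ Hy). unfold Gv. rewrite rm_inner_opp_l. lra.
Qed.

Lemma theta_low rho p : 0 < rho -> Rbar_le (Finite (T rho p)) (theta f g A p).
Proof.
  intro Hr. unfold theta, T. apply Rbar_plus_ge.
  - destruct (xf_spec f A nA Hf_proper Hf_convex Hf_lsc HA_lin HnA rho p Hr) as [Hd _].
    apply Rbar_le_fin_trans with (rm_inner p (A (xf f A rho p)) - rb (f (xf f A rho p))).
    apply Rbar_sup_ge. exists (xf f A rho p), (rb (f (xf f A rho p))). split; auto. apply dom_rb; auto.
    unfold Fv. pose proof (Nm_pos (xf f A rho p)). nra.
  - destruct (xg_spec g mu Hmu Hg_proper Hg_lsc Hg_sc p) as [Hd _].
    apply Rbar_sup_ge. exists (xg g p), (rb (g (xg g p))). split. apply domg_rb; auto.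
    unfold Gv. rewrite rm_inner_opp_l. ring.
Qed.

End PB2.

From Stdlib Require Import Reals Lra Lia Psatz Classical ClassicalEpsilon FunctionalExtensionality.
From Stdlib Require Fin.
Open Scope R_scope.

Section FGM.
Variable m : nat.
Variable phi : RM m -> R.
Variable G : RM m -> RM m.
Variables kap L : R.
Hypothesis Hk : 0 < kap.
Hypothesis HkL : kap <= L.
Hypothesis LB : forall p q, phi p + rm_inner (rm_minus q p) (G p) + kap / 2 * rm_inner (rm_minus q p) (rm_minus q p) <= phi q.
Hypothesis UB : forall p q, phi q <= phi p + rm_inner (rm_minus q p) (G p) + L / 2 * rm_inner (rm_minus q p) (rm_minus q p).
Variables P W : nat -> RM m.
Hypothesis P0 : P O = rm_zero.
Hypothesis W0 : W O = rm_zero.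
Hypothesis PS : forall k, P (S k) = rm_minus (W k) (rm_scal (1 / L) (G (W k))).
Hypothesis WS : forall k, W (S k) = rm_plus (P (S k))
   (rm_scal ((sqrt L - sqrt kap) / (sqrt L + sqrt kap)) (rm_minus (P (S k)) (P k))).

Let Ni (x : RM m) := rm_inner x x.

Lemma fgm_bound : forall z k, phi (P k) <= phi z + Rmax 0 (phi rm_zero - phi z + kap / 2 * rm_inner z z).
Proof.
  intros z.
  assert (sk : 0 < sqrt kap) by (apply sqrt_lt_R0; lra).
  assert (sL : 0 < sqrt L) by (apply sqrt_lt_R0; lra).
  set (q := sqrt kap / sqrt L).
  assert (Hq0 : 0 < q) by (unfold q; apply Rdiv_lt_0_compat; lra).
  assert (Hq1 : q <= 1).
  { unfold q. apply Rmult_le_reg_r with (sqrt L); auto. unfold Rdiv. rewrite Rmult_assoc, Rinv_l by lra.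
    rewrite Rmult_1_r, Rmult_1_l. apply sqrt_le_1_alt; auto. }
  assert (HqL : 1 / L = q * q / kap).
  { unfold q. replace (sqrt kap / sqrt L * (sqrt kap / sqrt L)) with ((sqrt kap * sqrt kap) / (sqrt L * sqrt L)) by fld.
    rewrite !sqrt_sqrt by lra. fld. }
  assert (Hb : (sqrt L - sqrt kap) / (sqrt L + sqrt kap) = (1 - q) / (1 + q)).
  { unfold q. fld. }
  set (V := fun k => (fun i => ((1 + q) * W k i - P k i) / q) : RM m).
  set (Phi := fun k => phi (P k) - phi z + kap / 2 * Ni (rm_minus (V k) z)).
  assert (Step : forall k, Phi (S k) <= (1 - q) * Phi k).
  { intro k.
    set (p := P k). set (w := W k). set (gg := G w). set (p' := P (S k)).
    set (a := rm_minus (V k) z). set (b := rm_minus w z).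
    assert (Ep' : p' = rm_minus w (rm_scal (q * q / kap) gg)) by (unfold p'; rewrite PS, <- HqL; reflexivity).
    assert (E1 : rm_minus (V (S k)) z = rm_plus (rm_scal (1 - q) a) (rm_plus (rm_scal q b) (rm_scal (- (q / kap)) gg))).
    { apply functional_extensionality; intro i. unfold V, a, b. rewrite WS, Hb. fold p'. rewrite Ep'.
      unfold rm_minus, rm_plus, rm_scal. unfold V. fold p. fold w. cbv beta. fld. }
    assert (E2 : rm_minus p w = rm_scal q (rm_minus b a)).
    { apply functional_extensionality; intro i. unfold V, a, b, rm_minus, rm_scal. unfold V. fold p w. cbv beta. fld. }
    assert (E3 : rm_minus p' w = rm_scal (- (q * q / kap)) gg).
    { rewrite Ep'. apply functional_extensionality; intro i. unfold rm_minus, rm_scal. ring. }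
    assert (E4 : rm_minus z w = rm_scal (-1) b).
    { apply functional_extensionality; intro i. unfold b, rm_minus, rm_scal. ring. }
    pose proof (UB w p') as I1. pose proof (LB w z) as I2. pose proof (LB w p) as I3. fold gg in I1, I2, I3.
    rewrite E3 in I1. rewrite E4 in I2. rewrite E2 in I3.
    set (NS := rm_inner (rm_scal q (rm_minus b a)) (rm_scal q (rm_minus b a))) in I3.
    assert (NSpos : 0 <= NS) by apply rm_inner_pos.
    assert (I4 : 0 <= rm_inner (rm_minus b a) (rm_minus b a)) by apply rm_inner_pos.
    rewrite (rm_inner_scal_l m q (rm_minus b a) gg), rm_inner_minus_l in I3.
    rewrite !rm_inner_scal_l, !rm_inner_scal_r in I1, I2.
    repeat rewrite ?rm_inner_minus_l, ?rm_inner_minus_r in I4.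
    unfold Phi, Ni. fold p p'. rewrite E1. fold a.
    rewrite !rm_inner_plus_l, !rm_inner_plus_r, !rm_inner_scal_l, !rm_inner_scal_r.
    rewrite (rm_inner_sym m b a) in I4 |- *. rewrite (rm_inner_sym m gg a), (rm_inner_sym m gg b).
    set (Naa := rm_inner a a) in *. set (Nbb := rm_inner b b) in *. set (Nab := rm_inner a b) in *.
    set (Nag := rm_inner a gg) in *. set (Nbg := rm_inner b gg) in *. set (Ngg := rm_inner gg gg) in *.
    assert (Z1 : L / 2 * (- (q * q / kap) * (- (q * q / kap) * Ngg)) = q * q / kap / 2 * Ngg).
    { replace (q * q / kap) with (1 / L) by auto. fld. }
    rewrite Z1 in I1.
    set (Z := q * q / kap * Ngg) in *.
    replace (q * q / kap / 2 * Ngg) with (Z / 2) in I1 by (unfold Z; fld).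
    replace (- (q * q / kap) * Ngg) with (- Z) in I1 by (unfold Z; fld).
    match goal with |- _ - _ + kap / 2 * ?X <= _ =>
      replace (kap / 2 * X) with (kap / 2 * ((1 - q) * (1 - q) * Naa + q * q * Nbb + 2 * q * (1 - q) * Nab) - q * (1 - q) * Nag - q * q * Nbg + Z / 2) by (unfold Z; fld) end.
    assert (M2 := Rmult_le_compat_l q _ _ (Rlt_le _ _ Hq0) I2).
    assert (M3 := Rmult_le_compat_l (1 - q) _ _ ltac:(lra) I3).
    assert (M4 : 0 <= q * (1 - q) * (kap / 2) * (Nbb - Nab - (Nab - Naa))).
    { apply Rmult_le_pos; [|lra]. apply Rmult_le_pos; [apply Rmult_le_pos|]; lra. }
    assert (M5 : 0 <= (1 - q) * (kap / 2) * NS).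
    { apply Rmult_le_pos; [apply Rmult_le_pos|]; lra. }
    nra. }
  assert (Phi0 : Phi O = phi rm_zero - phi z + kap / 2 * rm_inner z z).
  { unfold Phi. rewrite P0. f_equal. f_equal. unfold Ni.
    replace (rm_minus (V 0%nat) z) with (rm_scal (-1) z).
    rewrite rm_inner_scal_l, rm_inner_scal_r. ring.
    apply functional_extensionality; intro i. unfold V, rm_minus, rm_scal. rewrite P0, W0. unfold rm_zero. field. lra. }
  assert (Ind : forall k, Phi k <= Rmax 0 (Phi O)).
  { induction k. apply Rmax_r.
    specialize (Step k). pose proof (Rmax_l 0 (Phi O)).
    destruct (Rle_or_lt 0 (Phi k)). nra. nra. }
  intro k. specialize (Ind k). rewrite Phi0 in Ind. unfold Phi in Ind.
  pose proof (rm_inner_pos m (rm_minus (V k) z)). unfold Ni in Ind. nra.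
Qed.

End FGM.

From Stdlib Require Import Reals Lra Lia Psatz Classical ClassicalEpsilon FunctionalExtensionality.
From Stdlib Require Fin.
Open Scope R_scope.

Lemma weak_cv_shift {H : Hilbert} (u : nat -> H) x N : weak_cv u x -> weak_cv (fun j => u (j + N)%nat) x.
Proof. intros Hw y e He. destruct (Hw y e He) as [M HM]. exists M. intros n Hn. apply HM. lia. Qed.

Lemma cvRM_of_comp m (u : nat -> RM m) (x : RM m) : (forall i, Un_cv (fun n => u n i) (x i)) -> cvH (H := RMH m) u x.
Proof.
  intros Hc.
  assert (C0 : Un_cv (fun n => rm_inner (rm_plus (u n) (rm_opp x)) (rm_plus (u n) (rm_opp x))) 0).
  { apply (fsum_cv0 m (fun i n => (u n i + - x i) * (u n i + - x i))). intro i.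
    replace 0 with ((x i + - x i) * (x i + - x i)) by ring.
    apply CV_mult; apply CV_plus; auto; apply CV_const. }
  intros e He. destruct (C0 (e * e)) as [N HN]. nra. exists N. intros n Hn. specialize (HN n Hn).
  unfold Rdist in HN. rewrite Rminus_0_r in HN. apply Rabs_def2 in HN.
  unfold hnorm. rewrite <- (sqrt_square e) by lra. apply sqrt_lt_1_alt. split; [apply (rm_inner_pos m)|]. simpl. lra.
Qed.

Section PB3.
Context {H : Hilbert} {m : nat} (A : H -> RM m).
Variable nA : R.
Hypothesis (HA_lin : linear_op A).
Hypothesis (HnA : Rbar_sup (fun t => exists x : H, hnorm x <= 1 /\ t = rm_norm (A x)) = Finite nA).

Lemma A_weak_strong (u : nat -> H) x : weak_cv u x -> cvH (H := RMH m) (fun n => A (u n)) (A x).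
Proof.
  intro Hw. apply cvRM_of_comp. intro i.
  destruct (riesz (fun y => A y i) nA) as [a Ha].
  - split. intros x1 y1. rewrite (A_plus A HA_lin). reflexivity.
    intros c y1. rewrite (A_scal A HA_lin). reflexivity.
  - intro y. eapply Rle_trans. apply (rm_comp_le m (A y) i). apply (A_bound A nA HA_lin HnA).
  - rewrite (Ha x). apply (Un_cv_ext (fun n => hinner (u n) a)).
    intro n. rewrite Ha, hinner_sym. reflexivity.
    rewrite hinner_sym. apply Hw.
Qed.

End PB3.

From Stdlib Require Import Reals Lra Lia Psatz Classical ClassicalEpsilon FunctionalExtensionality.
From Stdlib Require Fin.
Open Scope R_scope.

Section PB4.
Context {H : Hilbert} {m : nat} (f : H -> Rbar) (g : RM m -> Rbar) (A : H -> RM m).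
Variable (mu nA Df : R).
Hypothesis (Hf_proper : properH f) (Hf_convex : convexH f) (Hf_lsc : lscH f).
Hypothesis (Hmu : 0 < mu) (Hg_proper : properRM g) (Hg_lsc : lscRM g) (Hg_sc : strongly_convexRM mu g).
Hypothesis (HA_lin : linear_op A).
Hypothesis (HnA : Rbar_sup (fun t => exists x : H, hnorm x <= 1 /\ t = rm_norm (A x)) = Finite nA).

Lemma sq_expand (p q : RM m) : rm_inner q q = rm_inner p p + 2 * rm_inner (rm_minus q p) p + rm_inner (rm_minus q p) (rm_minus q p).
Proof. rewrite !rm_inner_minus_l, !rm_inner_minus_r, (rm_inner_sym m p q). ring. Qed.

Lemma phi_LB rho kap p q : 0 < rho ->
  (T f g A rho p + kap / 2 * rm_inner p p) +
  rm_inner (rm_minus q p) (rm_plus (grad_theta_rho f g A rho p) (rm_scal kap p)) +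
  kap / 2 * rm_inner (rm_minus q p) (rm_minus q p) <= T f g A rho q + kap / 2 * rm_inner q q.
Proof.
  intro Hr. pose proof (T_LB f g A mu nA Hf_proper Hf_convex Hf_lsc Hmu Hg_proper Hg_lsc Hg_sc HA_lin HnA rho p q Hr).
  rewrite (sq_expand p q), rm_inner_plus_r, rm_inner_scal_r. nra.
Qed.

Lemma phi_UB rho kap p q : 0 < rho ->
  T f g A rho q + kap / 2 * rm_inner q q <=
  (T f g A rho p + kap / 2 * rm_inner p p) +
  rm_inner (rm_minus q p) (rm_plus (grad_theta_rho f g A rho p) (rm_scal kap p)) +
  Lrk nA mu rho kap / 2 * rm_inner (rm_minus q p) (rm_minus q p).
Proof.
  intro Hr. pose proof (T_UB f g A mu nA Hf_proper Hf_convex Hf_lsc Hmu Hg_proper Hg_lsc Hg_sc HA_lin HnA rho p q Hr).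
  rewrite (sq_expand p q), rm_inner_plus_r, rm_inner_scal_r. unfold Lrk.
  set (N := rm_inner (rm_minus q p) (rm_minus q p)) in *.
  replace ((nA ^ 2 / rho + 1 / mu + kap) / 2 * N) with ((nA ^ 2 / rho + 1 / mu) / 2 * N + kap / 2 * N) by (unfold Rdiv; ring).
  set (X := (nA ^ 2 / rho + 1 / mu) / 2 * N) in *. nra.
Qed.

Lemma fgm_bound_inst rho kap z k : 0 < rho -> 0 < kap ->
  T f g A rho (fst (fgm f g A nA mu rho kap k)) + kap / 2 * rm_inner (fst (fgm f g A nA mu rho kap k)) (fst (fgm f g A nA mu rho kap k))
  <= (T f g A rho z + kap / 2 * rm_inner z z) +
     Rmax 0 ((T f g A rho rm_zero + kap / 2 * rm_inner (@rm_zero m) (@rm_zero m)) - (T f g A rho z + kap / 2 * rm_inner z z) + kap / 2 * rm_inner z z).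
Proof.
  intros Hr Hk.
  assert (HkL : kap <= Lrk nA mu rho kap).
  { unfold Lrk. pose proof (pow2_ge_0 nA). assert (0 <= nA ^ 2 / rho) by (apply Rmult_le_pos; [auto|left; apply Rinv_0_lt_compat; auto]).
    assert (0 < 1 / mu) by (apply Rdiv_lt_0_compat; lra). lra. }
  exact (fgm_bound m (fun p => T f g A rho p + kap / 2 * rm_inner p p)
           (fun w => rm_plus (grad_theta_rho f g A rho w) (rm_scal kap w)) kap (Lrk nA mu rho kap) Hk HkL
           (fun p q => phi_LB rho kap p q Hr) (fun p q => phi_UB rho kap p q Hr)
           (fun j => fst (fgm f g A nA mu rho kap j)) (fun j => snd (fgm f g A nA mu rho kap j))
           eq_refl eq_refl
           (fun j => ltac:(simpl; destruct (fgm f g A nA mu rho kap j); reflexivity))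
           (fun j => ltac:(simpl; destruct (fgm f g A nA mu rho kap j); reflexivity)) z k).
Qed.

End PB4.

From Stdlib Require Import Reals Lra Lia Psatz Classical ClassicalEpsilon FunctionalExtensionality.
From Stdlib Require Fin.
Open Scope R_scope.

Theorem mainTheorem7
  (H : Hilbert) (m : nat) (f : H -> Rbar) (g : RM m -> Rbar) (A : H -> RM m)
  (mu : R)
  (Hf_proper : properH f) (Hf_convex : convexH f) (Hf_lsc : lscH f)
  (Hf_bdd : bounded_domH f)
  (Hmu : 0 < mu)
  (Hg_proper : properRM g) (Hg_lsc : lscRM g) (Hg_sc : strongly_convexRM mu g)
  (HA_lin : linear_op A) (HA_cont : continuous_op A)
  (Hqual : exists x, domH f x /\ domRM g (A x))
  (* nA = ||A|| (operator norm) *)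
  (nA : R)
  (HnA : Rbar_sup (fun t => exists x : H, hnorm x <= 1 /\ t = rm_norm (A x)) = Finite nA)
  (* Df = sup { ||x||^2 / 2 : x in dom f } *)
  (Df : R)
  (HDf : Rbar_sup (fun t => exists x, domH f x /\ t = 1 / 2 * (hnorm x) ^ 2) = Finite Df)
  (HDf_pos : 0 < Df)
  (* p* optimal for (D), with ||p*|| <= Rad *)
  (pstar : RM m) (Rad : R) (HRad : 0 < Rad)
  (Hpstar_opt : forall p, Rbar_le (theta f g A pstar) (theta f g A p))
  (Hpstar_norm : rm_norm pstar <= Rad)
  (* the tolerances *)
  (eps : nat -> R) (Heps_pos : forall n, 0 < eps n)
  (Heps_dec : Un_decreasing eps) (Heps_cv : Un_cv eps 0)
  (* the iteration indices k(eps_n) *)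
  (k : nat -> nat)
  (Hk_val : forall n,
     Rbar_le
       (theta f g A (fst (fgm f g A nA mu (eps n / (3 * Df)) (2 * eps n / (3 * Rad ^ 2)) (k n))))
       (Rbar_plus (theta f g A pstar) (Finite (eps n))))
  (Hk_grad : forall n,
     rm_norm (grad_theta_rho f g A (eps n / (3 * Df))
       (fst (fgm f g A nA mu (eps n / (3 * Df)) (2 * eps n / (3 * Rad ^ 2)) (k n))))
     <= 2 * eps n / Rad) :
  let xbar := fun n =>
    xf f A (eps n / (3 * Df))
      (fst (fgm f g A nA mu (eps n / (3 * Df)) (2 * eps n / (3 * Rad ^ 2)) (k n))) in
  (exists (phi : nat -> nat) (x : H),
     (forall j, (phi j < phi (S j))%nat) /\ weak_cv (fun j => xbar (phi j)) x) /\
  (forall x : H,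
     (exists phi : nat -> nat,
        (forall j, (phi j < phi (S j))%nat) /\ weak_cv (fun j => xbar (phi j)) x) ->
     exists fx gy, f x = Finite fx /\ g (A x) = Finite gy /\
       valP f g A = Finite (fx + gy)).
Proof.
  intros xbar.
  set (rho := fun n => eps n / (3 * Df)).
  set (kap := fun n => 2 * eps n / (3 * Rad ^ 2)).
  set (pk := fun n => fst (fgm f g A nA mu (rho n) (kap n) (k n))).
  assert (Hrho : forall n, 0 < rho n) by (intro n; unfold rho; apply Rdiv_lt_0_compat; [apply Heps_pos| lra]).
  assert (Hkap : forall n, 0 < kap n).
  { intro n; unfold kap; apply Rdiv_lt_0_compat. pose proof (Heps_pos n); lra. pose proof (pow_lt Rad 2 HRad); lra. }
  destruct (f_lower f A nA Df Hf_proper Hf_convex Hf_lsc HA_lin HnA HDf) as [fmin Hfmin].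
  assert (Hts : exists ts, theta f g A pstar = Finite ts).
  { pose proof (theta_low f g A mu nA Hf_proper Hf_convex Hf_lsc Hmu Hg_proper Hg_lsc Hg_sc HA_lin HnA 1 pstar ltac:(lra)) as L1.
    pose proof (theta_up f g A mu nA Df Hf_proper Hf_convex Hf_lsc Hmu Hg_proper Hg_lsc Hg_sc HA_lin HnA HDf 1 rm_zero ltac:(lra)) as L2.
    pose proof (Hpstar_opt rm_zero) as L3.
    destruct (theta f g A pstar); simpl in *; [eauto| |contradiction].
    destruct (theta f g A rm_zero); simpl in *; contradiction. }
  destruct Hts as [ts Hts].
  assert (Hlow : forall r p, 0 < r -> ts <= T f g A r p + r * Df).
  { intros r p Hr. pose proof (Hpstar_opt p) as L3. rewrite Hts in L3.
    pose proof (theta_up f g A mu nA Df Hf_proper Hf_convex Hf_lsc Hmu Hg_proper Hg_lsc Hg_sc HA_lin HnA HDf r p Hr) as L2.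
    destruct (theta f g A p); simpl in *; try contradiction. lra. }
  assert (Hup : forall r, 0 < r -> T f g A r pstar <= ts).
  { intros r Hr. pose proof (theta_low f g A mu nA Hf_proper Hf_convex Hf_lsc Hmu Hg_proper Hg_lsc Hg_sc HA_lin HnA r pstar Hr) as L1.
    rewrite Hts in L1. exact L1. }
  set (C0 := - fmin - rb (g (xg g rm_zero))).
  assert (HT0 : forall r, 0 < r -> T f g A r rm_zero <= C0).
  { intros r Hr. unfold T, Fv, Gv, C0. rewrite !rm_inner_zero_l.
    destruct (xf_spec f A nA Hf_proper Hf_convex Hf_lsc HA_lin HnA r rm_zero Hr) as [Hd _].
    pose proof (Hfmin _ _ (dom_rb f _ Hd)). pose proof (Nm_pos (xf f A r rm_zero)).
    assert (0 <= r / 2 * Nm (xf f A r rm_zero)) by (apply Rmult_le_pos; lra). lra. }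
  set (M0 := Rmax ts C0 - ts).
  assert (HM0 : 0 <= M0) by (unfold M0; pose proof (Rmax_l ts C0); lra).
  assert (HNps : rm_inner pstar pstar <= Rad ^ 2).
  { rewrite <- rm_norm_sq. pose proof (rm_norm_pos m pstar). nra. }
  assert (Hpn : forall n, rm_inner (pk n) (pk n) <= 3 * Rad ^ 2 * M0 / eps n + 2 * Rad ^ 2).
  { intro n.
    pose proof (fgm_bound_inst f g A mu nA Hf_proper Hf_convex Hf_lsc Hmu Hg_proper Hg_lsc Hg_sc HA_lin HnA (rho n) (kap n) pstar (k n) (Hrho n) (Hkap n)) as Hb.
    fold (pk n) in Hb. rewrite rm_inner_zero_l in Hb.
    pose proof (Hlow (rho n) (pk n) (Hrho n)). pose proof (Hup (rho n) (Hrho n)). pose proof (HT0 (rho n) (Hrho n)).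
    set (a := kap n / 2 * rm_inner pstar pstar) in *.
    assert (Ha : a <= kap n / 2 * Rad ^ 2) by (unfold a; apply Rmult_le_compat_l; [pose proof (Hkap n); lra| auto]).
    assert (Hc : kap n / 2 * rm_inner (pk n) (pk n) <= M0 + kap n / 2 * Rad ^ 2 + rho n * Df).
    { unfold M0. pose proof (Rmax_l ts C0). pose proof (Rmax_r ts C0).
      destruct (Rle_or_lt (T f g A (rho n) rm_zero + kap n / 2 * 0 - (T f g A (rho n) pstar + a) + a) 0) as [Hn|Hn].
      - rewrite Rmax_left in Hb by lra. lra.
      - rewrite Rmax_right in Hb by lra. lra. }
    assert (E1 : rho n * Df = eps n / 3) by (unfold rho; fld).
    rewrite E1 in Hc.
    pose proof (Heps_pos n).
    apply Rmult_le_reg_l with (kap n / 2). pose proof (Hkap n); lra.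
    replace (kap n / 2 * (3 * Rad ^ 2 * M0 / eps n + 2 * Rad ^ 2)) with (M0 + kap n / 2 * Rad ^ 2 + eps n / 3)
      by (unfold kap; pose proof (pow_lt Rad 2 HRad); fld).
    exact Hc. }
  assert (Hev : forall x0 a0 b0, f x0 = Finite a0 -> g (A x0) = Finite b0 -> forall del, 0 < del ->
     exists N, forall n, (N <= n)%nat -> rb (f (xbar n)) + rb (g (xg g (pk n))) <= a0 + b0 + del).
  { intros x0 a0 b0 Ha0 Hb0 del Hdel.
    set (e0 := Rmin (3 * del / 2) (Rmin (del * del / (96 * M0 + 1)) (del / 8))).
    assert (He0 : 0 < e0).
    { unfold e0. apply Rmin_glb_lt. lra. apply Rmin_glb_lt. apply Rdiv_lt_0_compat; nra. lra. }
    destruct (Heps_cv e0 He0) as [N HN]. exists N. intros n Hn.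
    specialize (HN n Hn). unfold Rdist in HN. pose proof (Heps_pos n) as Hen.
    rewrite Rminus_0_r, Rabs_right in HN by lra.
    assert (e1 : eps n < 3 * del / 2) by (pose proof (Rmin_l (3 * del / 2) (Rmin (del * del / (96 * M0 + 1)) (del / 8))); fold e0 in H0; lra).
    assert (e23 : Rmin (del * del / (96 * M0 + 1)) (del / 8) >= e0) by (unfold e0; pose proof (Rmin_r (3 * del / 2) (Rmin (del * del / (96 * M0 + 1)) (del / 8))); lra).
    assert (e2 : eps n < del * del / (96 * M0 + 1)) by (pose proof (Rmin_l (del * del / (96 * M0 + 1)) (del / 8)); lra).
    assert (e3 : eps n < del / 8) by (pose proof (Rmin_r (del * del / (96 * M0 + 1)) (del / 8)); lra).
    destruct (xf_spec f A nA Hf_proper Hf_convex Hf_lsc HA_lin HnA (rho n) (pk n) (Hrho n)) as [Hdx Hx].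
    specialize (Hx x0 a0 Ha0).
    destruct (xg_spec g mu Hmu Hg_proper Hg_lsc Hg_sc (pk n)) as [Hdy Hy].
    specialize (Hy (A x0) b0 Hb0).
    pose proof (dom_Df f Df HDf x0 (ex_intro _ a0 Ha0)) as HD0.
    pose proof (Hk_grad n) as Hgr. fold (rho n) (kap n) (pk n) in Hgr.
    set (gr := grad_theta_rho f g A (rho n) (pk n)) in *.
    pose proof (rm_CS m (pk n) gr) as Hcs.
    set (X := rm_norm (pk n) * rm_norm gr) in *.
    assert (HX0 : 0 <= X) by (apply Rmult_le_pos; apply rm_norm_pos).
    assert (Hg2 : rm_norm gr * rm_norm gr <= (2 * eps n / Rad) * (2 * eps n / Rad)).
    { pose proof (rm_norm_pos m gr). apply Rmult_le_compat; auto. }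
    assert (HX : X * X <= (3 * Rad ^ 2 * M0 / eps n + 2 * Rad ^ 2) * ((2 * eps n / Rad) * (2 * eps n / Rad))).
    { unfold X. replace (rm_norm (pk n) * rm_norm gr * (rm_norm (pk n) * rm_norm gr)) with
        ((rm_norm (pk n) * rm_norm (pk n)) * (rm_norm gr * rm_norm gr)) by ring.
      rewrite rm_norm_sq. apply Rmult_le_compat; auto. apply rm_inner_pos. apply Rmult_le_pos; apply rm_norm_pos. }
    replace ((3 * Rad ^ 2 * M0 / eps n + 2 * Rad ^ 2) * ((2 * eps n / Rad) * (2 * eps n / Rad))) with
      (12 * M0 * eps n + 8 * (eps n * eps n)) in HX by fld.
    assert (Q1 : 12 * M0 * eps n <= del * del / 8).
    { apply Rle_trans with (12 * M0 * (del * del / (96 * M0 + 1))).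
      apply Rmult_le_compat_l; lra.
      apply Rmult_le_reg_r with (96 * M0 + 1). lra.
      replace (12 * M0 * (del * del / (96 * M0 + 1)) * (96 * M0 + 1)) with (12 * M0 * (del * del)) by fld. nra. }
    assert (Q2 : 8 * (eps n * eps n) < del * del / 8) by nra.
    assert (HXd : X < del / 2) by nra.
    assert (Hgi : rm_inner (pk n) gr = rm_inner (pk n) (A (xbar n)) - rm_inner (pk n) (xg g (pk n))).
    { unfold gr, grad_theta_rho. rewrite rm_inner_minus_r. reflexivity. }
    assert (Hr0 : rho n / 2 * Nm x0 <= eps n / 3).
    { replace (eps n / 3) with (rho n / 2 * (2 * Df)) by (unfold rho; fld). apply Rmult_le_compat_l; auto. pose proof (Hrho n); lra. }
    assert (Hxb0 : 0 <= rho n / 2 * Nm (xbar n)) by (apply Rmult_le_pos; [pose proof (Hrho n); lra| apply Nm_pos]).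
    change (xf f A (rho n) (pk n)) with (xbar n) in Hx.
    set (t1 := rho n / 2 * Nm x0) in *. set (t2 := rho n / 2 * Nm (xbar n)) in *.
    lra. }
  assert (Hdomx : forall n, domH f (xbar n)).
  { intro n. exact (proj1 (xf_spec f A nA Hf_proper Hf_convex Hf_lsc HA_lin HnA (rho n) (pk n) (Hrho n))). }
  assert (Hdomy : forall n, domRM g (xg g (pk n))).
  { intro n. exact (proj1 (xg_spec g mu Hmu Hg_proper Hg_lsc Hg_sc (pk n))). }
  split.
  { destruct Hf_bdd as [Mf HMf]. destruct (weak_compact xbar Mf) as [ph [x [Hph Hw]]].
    intro n. apply HMf. apply Hdomx. exists ph, x. auto. }
  intros x [ph [Hph Hw]].
  pose proof (A_weak_strong A nA HA_lin HnA _ x Hw) as HAx.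
  assert (Hphge : forall j, (j <= ph j)%nat) by (apply sinc_ge; exact Hph).
  assert (Hy : cvH (H := RMH m) (fun j => xg g (pk (ph j))) (A x)).
  { intros e He. destruct (HAx (e / 2)) as [N1 HN1]; [lra|].
    destruct (Heps_cv (e * Rad / 4)) as [N2 HN2]. apply Rdiv_lt_0_compat; [apply Rmult_lt_0_compat|]; lra.
    exists (N1 + N2)%nat. intros j Hj. specialize (HN1 j ltac:(lia)).
    specialize (HN2 (ph j) ltac:(specialize (Hphge j); lia)). unfold Rdist in HN2.
    rewrite Rminus_0_r, Rabs_right in HN2 by (pose proof (Heps_pos (ph j)); lra).
    set (yj := xg g (pk (ph j))) in *. set (aj := A (xbar (ph j))) in *.
    assert (E : hminus (H := RMH m) yj (A x) = hplus (h := RMH m) (hminus (H := RMH m) yj aj) (hminus (H := RMH m) aj (A x))).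
    { apply heq_by_Nm. hexp. rewrite (@hinner_sym (RMH m) (A x) yj), (@hinner_sym (RMH m) aj yj), (@hinner_sym (RMH m) (A x) aj). ring. }
    rewrite E. eapply Rle_lt_trans. apply hnorm_triangle.
    rewrite hnorm_minus_sym.
    pose proof (Hk_grad (ph j)) as Hg. fold (rho (ph j)) (kap (ph j)) (pk (ph j)) in Hg.
    change (rm_norm (grad_theta_rho f g A (rho (ph j)) (pk (ph j)))) with (hnorm (H := RMH m) (hminus (H := RMH m) aj yj)) in Hg.
    assert (2 * eps (ph j) / Rad < e / 2).
    { apply Rmult_lt_reg_r with Rad; auto. unfold Rdiv. rewrite Rmult_assoc, Rinv_l by lra. lra. }
    lra. }
  assert (Key : forall x0 a0 b0, f x0 = Finite a0 -> g (A x0) = Finite b0 -> forall del, 0 < del ->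
      exists gx fx, g (A x) = Finite gx /\ f x = Finite fx /\ fx + gx <= a0 + b0 + del).
  { intros x0 a0 b0 Ha0 Hb0 del Hdel.
    destruct (Hev x0 a0 b0 Ha0 Hb0 (del / 2) ltac:(lra)) as [N1 HN1].
    destruct (g (A x)) as [gx| |] eqn:Eg.
    - destruct (Hg_lsc (A x) (gx - del / 2)) as [d [Hd Hnb]]. rewrite Eg; simpl; lra.
      destruct (Hy d Hd) as [N2 HN2].
      set (c := a0 + b0 + del - gx).
      set (Cs := fun y => exists r, f y = Finite r /\ r <= c).
      assert (Hmem : forall j, Cs (xbar (ph (j + (N1 + N2))%nat))).
      { intro j. pose proof (Hphge (j + (N1 + N2))%nat).
        specialize (HN1 (ph (j + (N1 + N2))%nat) ltac:(lia)).
        specialize (Hnb _ (HN2 (j + (N1 + N2))%nat ltac:(lia))).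
        destruct (Hdomy (ph (j + (N1 + N2))%nat)) as [r Hr]. rewrite Hr in Hnb, HN1. simpl in Hnb, HN1.
        exists (rb (f (xbar (ph (j + (N1 + N2))%nat)))). split. apply dom_rb, Hdomx. unfold c. lra. }
      assert (Cconv : convexS Cs).
      { intros y1 y2 t [r1 [Hr1 Hc1]] [r2 [Hr2 Hc2]] Ht.
        pose proof (Hf_convex y1 y2 r1 r2 t Hr1 Hr2 Ht) as Hc.
        destruct (Rbar_le_finite_r _ _ (proj1 Hf_proper _) Hc) as [r [Hr Hle]].
        exists r. split; auto. nra. }
      assert (Ccl : closedS Cs).
      { intros u y Hu Hyu.
        assert (Hr' : forall n, exists r, f (u n) = Finite r /\ r <= c) by exact Hu.
        apply choice_nat in Hr'. destruct Hr' as [r Hrn].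
        destruct (lsc_seq f u y r (fun _ => c) c Hf_lsc (proj1 Hf_proper) Hyu (fun n => proj1 (Hrn n)) (fun n => proj2 (Hrn n)) (CV_const c)) as [ry [Hry Hle]].
        exists ry; auto. }
      destruct (weak_closed Cs _ x Cconv Ccl Hmem (weak_cv_shift _ x (N1 + N2)%nat Hw)) as [fx [Hfx Hle]].
      exists gx, fx. split; auto. split; auto. unfold c in Hle. lra.
    - exfalso.
      destruct (Hg_lsc (A x) (a0 + b0 + del - fmin)) as [d [Hd Hnb]]. rewrite Eg; simpl; auto.
      destruct (Hy d Hd) as [N2 HN2].
      pose proof (Hphge (N1 + N2)%nat).
      specialize (HN1 (ph (N1 + N2))%nat ltac:(lia)).
      specialize (Hnb _ (HN2 (N1 + N2)%nat ltac:(lia))).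
      destruct (Hdomy (ph (N1 + N2))%nat) as [r Hr]. rewrite Hr in Hnb, HN1. simpl in Hnb, HN1.
      pose proof (Hfmin _ _ (dom_rb f _ (Hdomx (ph (N1 + N2))%nat))). lra.
    - exfalso. apply (proj1 Hg_proper (A x) Eg). }
  destruct Hqual as [x1 [[a1 Ha1] [b1 Hb1]]].
  destruct (Key x1 a1 b1 Ha1 Hb1 1 ltac:(lra)) as [gx [fx [Hgx [Hfx _]]]].
  exists fx, gx. split; auto. split; auto.
  unfold valP. apply Rbar_inf_attained.
  - exists x, fx, gx. auto.
  - intros t [x0 [a0 [b0 [Ha0 [Hb0 ->]]]]].
    apply Rnot_lt_le. intro Hlt.
    destruct (Key x0 a0 b0 Ha0 Hb0 ((fx + gx - (a0 + b0)) / 2) ltac:(lra)) as [gx' [fx' [Hg' [Hf' Hle]]]].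
    rewrite Hgx in Hg'. rewrite Hfx in Hf'. inversion Hg'; inversion Hf'; subst. lra.
Qed.
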